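(* Let ${\bf R}=(R_1,\dots,R_d)\in\mathbb R_+^d$, $u=\max\{R_1,\dots,R_d\}$, $v=\min\{R_1,\dots,R_d\}$, $p=\max\{\frac12,u\}$, $g({\bf R})=\frac{1}{1/R_1+\cdots+1/R_d}$, and $$E=4^{p/v}\,2^{u/v}\,(1+1/(2v))^{u/(2v^2)}\,(2ep)^{1/(2v)}.$$ Then for all integers $n>E^d$, $$2^{v-p}\sqrt{\frac{1}{e(d+2u)}}\le n^{g({\bf R})}\,a_n(I_d:W_2^{\bf R}(\mathbb T^d)\to L_2(\mathbb T^d))\le 2^{p+u}\Big(1+\frac{2v+1}{2v}\Big)^{\frac{u}{2v}}\sqrt{\frac{2eu}{d}}.$$
   Context: $\mathbb T^d$ carries the normalized Lebesgue measure, $\hat f({\bf k})$ are Fourier coefficients. $W_2^{\bf R}(\mathbb T^d)$ is the Hilbert space of $f\in L_2(\mathbb T^d)$ with norm $\big(\sum_{{\bf k}\in\mathbb Z^d}(1+\sum_{j=1}^d|k_j|^{2R_j})|\hat f({\bf k})|^2\big)^{1/2}$; $I_d$ is the identity embedding; $a_n(T)=\inf\{\|T-A\|:\operatorname{rank}A<n\}$ are the approximation numbers. *)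

(* Defs.v *)
From Stdlib Require Import Reals Lra List ZArith.
Open Scope R_scope.

Definition Zd (d : nat) := { k : list Z | length k = d }.

Definition C := (R * R)%type.
Definition C0 : C := (0, 0).
Definition Cadd (a b : C) : C := (fst a + fst b, snd a + snd b).
Definition Csub (a b : C) : C := (fst a - fst b, snd a - snd b).
Definition Cmul (a b : C) : C :=
  (fst a * fst b - snd a * snd b, fst a * snd b + snd a * fst b).
Definition Cnorm2 (a : C) : R := fst a ^ 2 + snd a ^ 2.

(* Fourier coefficient sequences on Z^d. *)
Definition seqC (d : nat) := Zd d -> C.

Definition psum {d} (w : Zd d -> R) (x : seqC d) (l : list (Zd d)) : R :=
  fold_right (fun k acc => w k * Cnorm2 (x k) + acc) 0 l.

Definition in_wl2 {d} (w : Zd d -> R) (x : seqC d) : Prop :=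
  exists M, forall l, NoDup l -> psum w x l <= M.

Definition wnorm_le {d} (w : Zd d -> R) (x : seqC d) (r : R) : Prop :=
  0 <= r /\ forall l, NoDup l -> psum w x l <= r ^ 2.

(* t^s for t >= 0, s > 0, with 0^s = 0 *)
Definition pw (t s : R) : R :=
  if Req_EM_T t 0 then 0 else Rpower t s.

Definition sob_weight (d : nat) (Rv : nat -> R) (k : Zd d) : R :=
  1 + fold_right
        (fun j acc => pw (Rabs (IZR (nth j (proj1_sig k) 0%Z))) (2 * Rv j) + acc)
        0 (seq 0 d).

(* L2(T^d) (normalized measure) via Parseval: unit weight *)
Definition one_weight (d : nat) (k : Zd d) : R := 1.

Definition in_W d Rv (x : seqC d) := in_wl2 (sob_weight d Rv) x.
Definition in_L2 d (x : seqC d) := in_wl2 (one_weight d) x.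

Definition lincomb {d} (cs : list C) (ys : list (seqC d)) (k : Zd d) : C :=
  fold_right Cadd C0 (map (fun p => Cmul (fst p) (snd p k)) (combine cs ys)).

Definition admissible (d : nat) (Rv : nat -> R) (n : nat)
  (A : seqC d -> seqC d) : Prop :=
  (forall x, in_W d Rv x -> in_L2 d (A x)) /\
  (forall x y a b, in_W d Rv x -> in_W d Rv y ->
     forall k, A (fun i => Cadd (Cmul a (x i)) (Cmul b (y i))) k
             = Cadd (Cmul a (A x k)) (Cmul b (A y k))) /\
  (exists ys : list (seqC d), (length ys < n)%nat /\
     forall x, in_W d Rv x -> exists cs : list C,
        length cs = length ys /\ forall k, A x k = lincomb cs ys k).

Definition err_le d Rv (A : seqC d -> seqC d) (M : R) : Prop :=
  0 <= M /\
  forall x, in_W d Rv x -> wnorm_le (sob_weight d Rv) x 1 ->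
    wnorm_le (one_weight d) (fun k => Csub (x k) (A x k)) M.

Definition approx_set d Rv n (M : R) : Prop :=
  exists A, admissible d Rv n A /\ err_le d Rv A M.

Definition is_inf (S : R -> Prop) (a : R) : Prop :=
  (forall M, S M -> a <= M) /\ (forall b, (forall M, S M -> b <= M) -> b <= a).

Definition is_approx_number d Rv n (a : R) : Prop :=
  is_inf (approx_set d Rv n) a.

Definition Rmaxd (d : nat) (Rv : nat -> R) : R :=
  fold_right (fun j acc => Rmax (Rv j) acc) (Rv 0%nat) (seq 0 d).
Definition Rmind (d : nat) (Rv : nat -> R) : R :=
  fold_right (fun j acc => Rmin (Rv j) acc) (Rv 0%nat) (seq 0 d).
Definition gR (d : nat) (Rv : nat -> R) : R :=
  / fold_right (fun j acc => / Rv j + acc) 0 (seq 0 d).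

Definition Econst (d : nat) (Rv : nat -> R) : R :=
  let u := Rmaxd d Rv in let v := Rmind d Rv in let p := Rmax (1/2) u in
  Rpower 4 (p / v) * Rpower 2 (u / v)
  * Rpower (1 + 1 / (2 * v)) (u / (2 * v ^ 2))
  * Rpower (2 * exp 1 * p) (1 / (2 * v)).

(* Main.v *)
Require Import Defs.
From Stdlib Require Import Reals List ZArith.
From Stdlib Require Import Lra Lia Permutation Classical FunctionalExtensionality Eqdep_dec.
From Coquelicot Require Import Complex.
Open Scope R_scope.

Arguments Cplus : simpl never.
Arguments Cmult : simpl never.
Arguments Cminus : simpl never.
Arguments Copp : simpl never.
Arguments Cdiv : simpl never.
Arguments RtoC : simpl never.
Definition csum (l : list C) : C := fold_right Cplus (RtoC 0) l.

Lemma csum_app l1 l2 : csum (l1 ++ l2) = Cplus (csum l1) (csum l2).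
Proof. induction l1; simpl. ring. rewrite IHl1. ring. Qed.

Lemma csum_perm l l' : Permutation l l' -> csum l = csum l'.
Proof. induction 1; simpl; auto; try congruence. unfold csum; ring. Qed.

Lemma csum_lin {A} (l : list A) (f g : A -> C) (k : C) :
  csum (map (fun p => Cplus (f p) (Cmult k (g p))) l)
  = Cplus (csum (map f l)) (Cmult k (csum (map g l))).
Proof. induction l; simpl. ring. rewrite IHl. ring. Qed.

Lemma csum_scal {A} (l : list A) (f : A -> C) (k : C) :
  csum (map (fun p => Cmult k (f p)) l) = Cmult k (csum (map f l)).
Proof. induction l; simpl. ring. rewrite IHl. ring. Qed.

Lemma csum_zero {A} (l : list A) (f : A -> C) :
  (forall x, In x l -> f x = RtoC 0) -> csum (map f l) = RtoC 0.
Proof. induction l; simpl; intros H. auto. rewrite H by auto. rewrite IHl by auto. ring. Qed.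

Definition lcp (P : list (C * (nat -> C))) (j : nat) : C :=
  csum (map (fun p => Cmult (fst p) (snd p j)) P).

Lemma recover {A B} (X : list A) (g : A -> B) (P' : list (C * B)) :
  map snd P' = map g X ->
  exists P0 : list (C * A), map snd P0 = X /\ map (fun p => (fst p, g (snd p))) P0 = P'.
Proof.
  revert P'; induction X as [|x X IH]; intros [|[c b] P'] H; simpl in H; try discriminate.
  - exists nil; auto.
  - injection H; intros H1 H2. destruct (IH P' H1) as [P0 [E1 E2]].
    exists ((c, x) :: P0). simpl. rewrite E1, E2, H2. auto.
Qed.

Lemma C1_neq_0 : RtoC 1 <> RtoC 0.
Proof. intro H. injection H. lra. Qed.

Lemma kernel : forall m (V : list (nat -> C)), (m < length V)%nat ->
  exists P, map snd P = V /\ (exists p, In p P /\ fst p <> RtoC 0)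
    /\ forall j, (j < m)%nat -> lcp P j = RtoC 0.
Proof.
  induction m as [|m IHm]; intros V HV.
  - destruct V as [|v V']; simpl in HV; [lia|].
    exists ((RtoC 1, v) :: map (fun x => (RtoC 0, x)) V'). split; [|split].
    + simpl. rewrite map_map. simpl. rewrite map_id. auto.
    + exists (RtoC 1, v). split; [left; auto|]. apply C1_neq_0.
    + intros; lia.
  - destruct (classic (exists x, In x V /\ x 0%nat <> RtoC 0)) as [[x [Hx Hx0]]|Hno].
    + destruct (in_split _ _ Hx) as [V1 [V2 EV]].
      set (X := V1 ++ V2).
      set (g := fun (y : nat -> C) (j : nat) => Cminus (y (S j)) (Cmult (Cdiv (y 0%nat) (x 0%nat)) (x (S j)))).
      assert (HX : (m < length (map g X))%nat).
      { rewrite length_map. unfold X. rewrite EV in HV. rewrite length_app in *. simpl in HV. lia. }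
      destruct (IHm _ HX) as [P' [E' [[p' [Hp' Hp'0]] H']]].
      destruct (recover X g P' E') as [P0 [E1 E2]].
      set (s := csum (map (fun p => Cmult (fst p) (snd p 0%nat)) P0)).
      set (c0 := Copp (Cdiv s (x 0%nat))).
      set (P1 := (c0, x) :: P0).
      assert (Hperm : Permutation V (map snd P1)).
      { unfold P1. simpl. rewrite E1. unfold X. rewrite EV. apply Permutation_sym, Permutation_middle. }
      destruct (Permutation_map_inv _ _ Hperm) as [P [EP HPP]].
      exists P. split; [auto|split].
      * subst P'. apply in_map_iff in Hp'. destruct Hp' as [p0 [Ep0 Hp0]].
        exists p0. split. apply (Permutation_in _ HPP). right; auto.
        rewrite <- Ep0 in Hp'0. simpl in Hp'0. auto.
      * intros j Hj. unfold lcp. rewrite <- (csum_perm _ _ (Permutation_map _ HPP)).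
        unfold P1. simpl.
        destruct j as [|j].
        -- fold s. unfold c0. field. auto.
        -- assert (Hj' : (j < m)%nat) by lia. specialize (H' j Hj').
           unfold lcp in H'. subst P'. rewrite map_map in H'. simpl in H'. unfold g in H'.
           assert (E : csum (map (fun p => Cmult (fst p) (Cminus (snd p (S j)) (Cmult (Cdiv (snd p 0%nat) (x 0%nat)) (x (S j))))) P0)
             = Cplus (csum (map (fun p => Cmult (fst p) (snd p (S j))) P0)) (Cmult (Copp (Cdiv (x (S j)) (x 0%nat))) s)).
           { unfold s. rewrite <- csum_lin. f_equal. apply map_ext. intros. field. auto. }
           rewrite E in H'. unfold c0.
           replace (csum (map (fun p => Cmult (fst p) (snd p (S j))) P0)) with
             (Cminus (Cplus (csum (map (fun p => Cmult (fst p) (snd p (S j))) P0)) (Cmult (Copp (Cdiv (x (S j)) (x 0%nat))) s)) (Cmult (Copp (Cdiv (x (S j)) (x 0%nat))) s)) by ring.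
           rewrite H'. field. auto.
    + set (g := fun (y : nat -> C) (j : nat) => y (S j)).
      assert (HX : (m < length (map g V))%nat) by (rewrite length_map; lia).
      destruct (IHm _ HX) as [P' [E' [[p' [Hp' Hp'0]] H']]].
      destruct (recover V g P' E') as [P0 [E1 E2]].
      exists P0. split; [auto|split].
      * subst P'. apply in_map_iff in Hp'. destruct Hp' as [p0 [Ep0 Hp0]].
        exists p0. split; auto. rewrite <- Ep0 in Hp'0. auto.
      * intros j Hj. unfold lcp. destruct j as [|j].
        -- apply csum_zero. intros p Hp. 
           assert (In (snd p) V) by (rewrite <- E1; apply in_map; auto).
           destruct (Ceq_dec (snd p 0%nat) (RtoC 0)) as [e|e].
           rewrite e. ring. exfalso; apply Hno; eauto.
        -- assert (Hj' : (j < m)%nat) by lia. specialize (H' j Hj').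
           unfold lcp in H'. subst P'. rewrite map_map in H'. simpl in H'. exact H'.
Qed.

Lemma Cadd_P : Cadd = Cplus. Proof. reflexivity. Qed.
Lemma Cmul_P : Cmul = Cmult. Proof. reflexivity. Qed.
Lemma C0_P : C0 = RtoC 0. Proof. reflexivity. Qed.
Lemma Csub_P : Csub = Cminus. Proof. reflexivity. Qed.

Ltac toC := rewrite ?Cadd_P, ?Cmul_P, ?C0_P, ?Csub_P;
  match goal with |- @eq _ ?a ?b => change (@eq Complex.C a b) end.
Ltac ccomp := unfold Cadd, Cmul, Csub, C0, Cplus, Cmult, Cminus, Copp, RtoC;
  apply injective_projections; simpl; ring.
Ltac cring := first [toC; ring | ccomp].

Lemma Zd_eq {d} (a b : Zd d) : proj1_sig a = proj1_sig b -> a = b.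
Proof. destruct a as [a Ha], b as [b Hb]; simpl; intros; subst. f_equal. apply UIP_dec, Nat.eq_dec. Qed.

Definition Zd_dec {d} (a b : Zd d) : {a = b} + {a <> b}.
Proof.
  destruct (list_eq_dec Z.eq_dec (proj1_sig a) (proj1_sig b)) as [e|e].
  left; apply Zd_eq; auto. right; intro; subst; auto.
Defined.

Definition ev {d} (k0 : Zd d) : seqC d := fun k => if Zd_dec k k0 then RtoC 1 else C0.

Lemma Cnorm2_nonneg a : 0 <= Cnorm2 a.
Proof. unfold Cnorm2. nra. Qed.
Lemma Cnorm2_0 : Cnorm2 C0 = 0.
Proof. unfold Cnorm2, C0; simpl. ring. Qed.
Lemma Cnorm2_pos a : a <> RtoC 0 -> 0 < Cnorm2 a.
Proof. destruct a as [x y]. unfold Cnorm2; simpl. intros H.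
  destruct (Req_dec x 0); destruct (Req_dec y 0); subst; [exfalso; apply H; reflexivity| nra..]. Qed.
Lemma Cnorm2_scal r a : Cnorm2 (Cmult (RtoC r) a) = r ^ 2 * Cnorm2 a.
Proof. destruct a; unfold Cnorm2, Cmult, RtoC; simpl. ring. Qed.

Lemma psum_app {d} w (x : seqC d) l1 l2 : psum w x (l1 ++ l2) = psum w x l1 + psum w x l2.
Proof. induction l1; simpl. ring. rewrite IHl1. ring. Qed.

Lemma psum_nonneg {d} w (x : seqC d) l : (forall k, 0 <= w k) -> 0 <= psum w x l.
Proof. intros Hw; induction l; simpl. lra. pose proof (Hw a); pose proof (Cnorm2_nonneg (x a)). nra. Qed.

Lemma psum_incl {d} w (x : seqC d) l K : (forall k, 0 <= w k) -> NoDup l -> incl l K ->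
  psum w x l <= psum w x K.
Proof.
  intros Hw Hl; revert K; induction Hl as [|a l Ha Hl IH]; intros K HK; simpl.
  - apply psum_nonneg; auto.
  - assert (HaK : In a K) by (apply HK; left; auto).
    destruct (in_split _ _ HaK) as [K1 [K2 EK]]. subst K.
    rewrite psum_app. simpl.
    assert (psum w x l <= psum w x (K1 ++ K2)).
    { apply IH. intros y Hy. assert (In y (K1 ++ a :: K2)) by (apply HK; right; auto).
      apply in_app_or in H. apply in_or_app. destruct H as [H|[H|H]]; auto. subst; contradiction. }
    rewrite psum_app in H. lra.
Qed.

Lemma psum_ext {d} w (x y : seqC d) l : (forall k, x k = y k) -> psum w x l = psum w y l.
Proof. intros H; induction l; simpl; auto. rewrite H, IHl. auto. Qed.

Lemma psum_filter {d} w (x : seqC d) l (P : Zd d -> bool) :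
  (forall k, P k = false -> x k = C0) -> psum w x l = psum w x (filter P l).
Proof. intros H; induction l; simpl; auto. destruct (P a) eqn:E; simpl; rewrite IHl; auto.
  rewrite H, Cnorm2_0 by auto. ring. Qed.

Definition inb {d} (K : list (Zd d)) (k : Zd d) : bool := if in_dec Zd_dec k K then true else false.

Lemma psum_supp {d} w (x : seqC d) l K : (forall k, 0 <= w k) -> NoDup l ->
  (forall k, ~ In k K -> x k = C0) -> psum w x l <= psum w x K.
Proof.
  intros Hw Hl HK. rewrite (psum_filter w x l (inb K)).
  apply psum_incl; auto. apply NoDup_filter; auto.
  intros y Hy. apply filter_In in Hy. destruct Hy as [_ Hy]. unfold inb in Hy. destruct in_dec; auto; discriminate.
  intros k Hk. apply HK. unfold inb in Hk. destruct in_dec; auto; discriminate.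
Qed.

Lemma inwl2_supp {d} w (x : seqC d) K : (forall k, 0 <= w k) ->
  (forall k, ~ In k K -> x k = C0) -> in_wl2 w x.
Proof. intros Hw HK. exists (psum w x K). intros l Hl. apply psum_supp; auto. Qed.

Lemma pw_nonneg t s : 0 <= pw t s.
Proof. unfold pw. destruct Req_EM_T. lra. unfold Rpower. left; apply exp_pos. Qed.

Lemma fold_pw_nonneg (f : nat -> R) l : (forall j, 0 <= f j) -> 0 <= fold_right (fun j acc => f j + acc) 0 l.
Proof. intros H; induction l; simpl. lra. pose proof (H a); lra. Qed.

Lemma sob_ge1 d Rv k : 1 <= sob_weight d Rv k.
Proof. unfold sob_weight. pose proof (fold_pw_nonneg (fun j => pw (Rabs (IZR (nth j (proj1_sig k) 0%Z))) (2 * Rv j)) (seq 0 d) (fun j => pw_nonneg _ _)). lra. Qed.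

Lemma sob_nonneg d Rv k : 0 <= sob_weight d Rv k.
Proof. pose proof (sob_ge1 d Rv k); lra. Qed.
Lemma one_nonneg d k : 0 <= one_weight d k.
Proof. unfold one_weight; lra. Qed.

Definition fs {d} (P : list (C * Zd d)) : seqC d :=
  fun k => fold_right (fun p acc => Cadd (Cmul (fst p) (ev (snd p) k)) acc) C0 P.

Lemma fs_supp {d} (P : list (C * Zd d)) k : ~ In k (map snd P) -> fs P k = C0.
Proof.
  induction P as [|[c k0] P IH]; simpl; intros H; auto.
  unfold fs in *; simpl. rewrite IH by tauto. unfold ev. destruct Zd_dec. subst; tauto.
  cring.
Qed.

Lemma fs_val {d} (P : list (C * Zd d)) q : NoDup (map snd P) -> In q P -> fs P (snd q) = fst q.
Proof.
  induction P as [|[c k0] P IH]; simpl; intros Hn Hq. contradiction.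
  inversion Hn; subst. unfold fs; simpl. fold (fs P (snd q)).
  destruct Hq as [Hq|Hq].
  - subst q; simpl. rewrite fs_supp by auto. unfold ev. destruct Zd_dec; [|tauto].
    cring.
  - rewrite IH by auto. unfold ev. destruct Zd_dec.
    + exfalso. apply H1. rewrite <- e. apply in_map; auto.
    + cring.
Qed.

Lemma psum_vals {d} w (x : seqC d) (Q : list (C * Zd d)) : (forall q, In q Q -> x (snd q) = fst q) ->
  psum w x (map snd Q) = fold_right (fun p acc => w (snd p) * Cnorm2 (fst p) + acc) 0 Q.
Proof.
  induction Q as [|q Q IH]; intros H; simpl; auto. unfold psum in *. simpl. rewrite H by (left; auto).
  rewrite IH; auto. intros; apply H; right; auto.
Qed.

Lemma psum_fs {d} w (P : list (C * Zd d)) : NoDup (map snd P) ->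
  psum w (fs P) (map snd P) = fold_right (fun p acc => w (snd p) * Cnorm2 (fst p) + acc) 0 P.
Proof. intros Hn. apply psum_vals. intros; apply fs_val; auto. Qed.

Lemma fs_inW {d} Rv (P : list (C * Zd d)) : in_W d Rv (fs P).
Proof. apply (inwl2_supp _ _ (map snd P)). apply sob_nonneg. apply fs_supp. Qed.

Lemma ev_inW {d} Rv (k0 : Zd d) : in_W d Rv (ev k0).
Proof. apply (inwl2_supp _ _ (k0 :: nil)). apply sob_nonneg. intros k Hk. unfold ev.
  destruct Zd_dec; auto. subst; simpl in Hk; tauto. Qed.

Lemma zero_inW {d} Rv : in_W d Rv (fun _ : Zd d => C0).
Proof. apply (inwl2_supp _ _ nil). apply sob_nonneg. auto. Qed.



Lemma A_zero {d} Rv (A : seqC d -> seqC d) :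
  (forall x y a b, in_W d Rv x -> in_W d Rv y ->
     forall k, A (fun i => Cadd (Cmul a (x i)) (Cmul b (y i))) k
             = Cadd (Cmul a (A x k)) (Cmul b (A y k))) ->
  forall k, A (fun _ => C0) k = C0.
Proof.
  intros Hlin k. pose proof (Hlin _ _ C0 C0 (zero_inW Rv) (zero_inW Rv) k) as H. cbv beta in H.
  replace (fun i : Zd d => Cadd (Cmul C0 C0) (Cmul C0 C0)) with (fun _ : Zd d => C0) in H.
  rewrite H. cring.
  apply functional_extensionality; intros. cring.
Qed.

Lemma A_fs {d} Rv (A : seqC d -> seqC d) :
  (forall x y a b, in_W d Rv x -> in_W d Rv y ->
     forall k, A (fun i => Cadd (Cmul a (x i)) (Cmul b (y i))) k
             = Cadd (Cmul a (A x k)) (Cmul b (A y k))) ->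
  forall P k, A (fs P) k = fold_right (fun p acc => Cadd (Cmul (fst p) (A (ev (snd p)) k)) acc) C0 P.
Proof.
  intros Hlin P k. induction P as [|[c k0] P IH]; simpl.
  - apply (A_zero Rv A Hlin).
  - replace (fs ((c, k0) :: P)) with (fun i => Cadd (Cmul c (ev k0 i)) (Cmul (RtoC 1) (fs P i))).
    rewrite Hlin by (apply ev_inW || apply fs_inW). rewrite IH. cring.
    apply functional_extensionality; intros i. unfold fs; simpl. cring.
Qed.

Lemma csum_fold {A} (f : A -> C) l :
  fold_right (fun p acc => Cadd (f p) acc) C0 l = csum (map f l).
Proof. induction l; simpl; auto. rewrite IHl. reflexivity. Qed.

Lemma csum_add {A} (l : list A) (f g : A -> C) :
  csum (map (fun p => Cplus (f p) (g p)) l) = Cplus (csum (map f l)) (csum (map g l)).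
Proof. induction l; simpl. unfold csum; simpl; ring. unfold csum in *; simpl. rewrite IHl. ring. Qed.

Lemma lincomb_seq {d} (cs : list C) (ys : list (seqC d)) k : length cs = length ys ->
  lincomb cs ys k = csum (map (fun j => Cmult (nth j cs C0) (nth j ys (fun _ => C0) k)) (seq 0 (length ys))).
Proof.
  unfold lincomb. rewrite csum_fold. revert ys; induction cs as [|c cs IH]; intros [|y ys] H; simpl in *; try lia; auto.
  rewrite IH by lia. rewrite <- seq_shift, map_map. reflexivity.
Qed.

Lemma csum_exchange {A} (L : list A) (J : list nat) (c : A -> C) (a : A -> nat -> C) (Y : nat -> C) :
  csum (map (fun p => Cmult (c p) (csum (map (fun j => Cmult (a p j) (Y j)) J))) L)
  = csum (map (fun j => Cmult (csum (map (fun p => Cmult (c p) (a p j)) L)) (Y j)) J).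
Proof.
  induction L as [|q L IH]; simpl.
  - symmetry. apply csum_zero. intros. unfold csum; simpl. ring.
  - unfold csum at 1. simpl. fold (csum (map (fun p => Cmult (c p) (csum (map (fun j => Cmult (a p j) (Y j)) J))) L)).
    rewrite IH. 
    transitivity (csum (map (fun j => Cplus (Cmult (c q) (Cmult (a q j) (Y j))) (Cmult (csum (map (fun p => Cmult (c p) (a p j)) L)) (Y j))) J)).
    + rewrite csum_add. rewrite csum_scal. reflexivity.
    + f_equal. apply map_ext. intros j. unfold csum at 1; simpl. fold (csum (map (fun p => Cmult (c p) (a p j)) L)). ring.
Qed.

Lemma fold_ge_term {A} (f : A -> R) l p : (forall q, In q l -> 0 <= f q) -> In p l ->
  f p <= fold_right (fun q acc => f q + acc) 0 l.
Proof.
  induction l; simpl; intros H Hp. contradiction.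
  assert (0 <= fold_right (fun q acc => f q + acc) 0 l).
  { clear -H. induction l; simpl. lra. pose proof (H a0 (or_intror (or_introl eq_refl))).
    assert (0 <= fold_right (fun q acc => f q + acc) 0 l). apply IHl. intros q [Hq|Hq]; apply H; simpl; tauto. lra. }
  destruct Hp as [Hp|Hp]. subst. lra. pose proof (H a (or_introl eq_refl)). pose proof (IHl (fun q Hq => H q (or_intror Hq)) Hp). lra.
Qed.

Lemma fold_le {A} (f g : A -> R) l : (forall q, In q l -> f q <= g q) ->
  fold_right (fun q acc => f q + acc) 0 l <= fold_right (fun q acc => g q + acc) 0 l.
Proof. induction l; simpl; intros H. lra. pose proof (H a (or_introl eq_refl)). pose proof (IHl (fun q Hq => H q (or_intror Hq))). lra. Qed.

Lemma fold_scal {A} (f : A -> R) l k :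
  fold_right (fun q acc => k * f q + acc) 0 l = k * fold_right (fun q acc => f q + acc) 0 l.
Proof. induction l; simpl. ring. rewrite IHl. ring. Qed.

Lemma fold_map_scal {A B} (g : A -> B) (f : B -> R) (h : A -> R) l k :
  (forall a, f (g a) = k * h a) ->
  fold_right (fun p acc => f p + acc) 0 (map g l) = k * fold_right (fun p acc => h p + acc) 0 l.
Proof. intros H; induction l; simpl. ring. rewrite IHl, H. ring. Qed.

Lemma LB_core d Rv n (S : list (Zd d)) T0 A M : NoDup S -> length S = n ->
  (forall k, In k S -> sob_weight d Rv k <= T0) ->
  admissible d Rv n A -> err_le d Rv A M -> / T0 <= M ^ 2.
Proof.
  intros HS HSn HT [HL2 [Hlin [ys [Hlen Hspan]]]] [HM Herr].
  assert (HTr : exists Tr : list (Zd d * list C), map fst Tr = S /\ forall t, In t Tr ->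
     length (snd t) = length ys /\ forall k, A (ev (fst t)) k = lincomb (snd t) ys k).
  { clear -Hspan. induction S as [|s S IH]. exists nil; simpl; split; auto; tauto.
    destruct IH as [Tr [E1 E2]]. destruct (Hspan (ev s) (ev_inW Rv s)) as [cs [Hc1 Hc2]].
    exists ((s, cs) :: Tr). simpl. rewrite E1. split; auto. intros t [Ht|Ht]; [subst; simpl; auto| auto]. }
  destruct HTr as [Tr [ETr HTr]].
  set (h := fun (t : Zd d * list C) (j : nat) => nth j (snd t) C0).
  assert (HV : (length ys < length (map h Tr))%nat).
  { rewrite length_map. rewrite <- (length_map fst Tr), ETr. lia. }
  destruct (kernel _ _ HV) as [P [EP [[p' [Hp' Hp'0]] Hker]]].
  destruct (recover Tr h P EP) as [P0 [E1 E2]].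
  set (Q := fun r => map (fun p : C * (Zd d * list C) => (Cmult (RtoC r) (fst p), fst (snd p))) P0).
  assert (HQS : forall r, map snd (Q r) = S).
  { intros r. unfold Q. rewrite map_map. simpl. rewrite <- ETr, <- E1, map_map. reflexivity. }
  assert (HinTr : forall p, In p P0 -> In (snd p) Tr).
  { intros p Hp. rewrite <- E1. apply in_map; auto. }
  assert (Az : forall r k, A (fs (Q r)) k = C0).
  { intros r k. rewrite (A_fs Rv A Hlin). rewrite csum_fold. unfold Q. rewrite map_map. simpl.
    rewrite (map_ext_in _ (fun p => Cmult (RtoC r) (Cmult (fst p)
        (csum (map (fun j => Cmult (h (snd p) j) (nth j ys (fun _ => C0) k)) (seq 0 (length ys))))))).
    2:{ intros p Hp. destruct (HTr _ (HinTr p Hp)) as [Hl Hs]. rewrite Hs. rewrite lincomb_seq by auto.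
        unfold h. cring. }
    rewrite csum_scal. rewrite csum_exchange. rewrite csum_zero. cring.
    intros j Hj. apply in_seq in Hj. specialize (Hker j ltac:(lia)). unfold lcp in Hker.
    rewrite <- E2 in Hker. rewrite map_map in Hker. simpl in Hker. rewrite Hker. ring. }
  set (W0 := fold_right (fun p acc => sob_weight d Rv (fst (snd p)) * Cnorm2 (fst p) + acc) 0 P0).
  set (N0 := fold_right (fun p acc => Cnorm2 (fst p) + acc) 0 P0).
  assert (HpsW : forall r, psum (sob_weight d Rv) (fs (Q r)) S = r ^ 2 * W0).
  { intros r. rewrite <- (HQS r) at 1. rewrite psum_fs by (rewrite HQS; auto). unfold Q, W0.
    apply fold_map_scal. intros [c [k cs]]; cbn [fst snd]. rewrite Cnorm2_scal. ring. }
  assert (HpsN : forall r, psum (one_weight d) (fs (Q r)) S = r ^ 2 * N0).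
  { intros r. rewrite <- (HQS r) at 1. rewrite psum_fs by (rewrite HQS; auto). unfold Q, N0.
    apply fold_map_scal. intros [c [k cs]]; cbn [fst snd]. rewrite Cnorm2_scal. unfold one_weight. ring. }
  assert (HN0 : 0 < N0).
  { subst P. apply in_map_iff in Hp'. destruct Hp' as [p0 [Ep0 Hp0]]. rewrite <- Ep0 in Hp'0. simpl in Hp'0.
    pose proof (Cnorm2_pos _ Hp'0).
    pose proof (fold_ge_term (fun p : C * (Zd d * list C) => Cnorm2 (fst p)) P0 p0 (fun q _ => Cnorm2_nonneg _) Hp0).
    unfold N0. exact (Rlt_le_trans _ _ _ H H0). }
  assert (HWN : N0 <= W0).
  { unfold N0, W0. apply fold_le. intros q _. pose proof (sob_ge1 d Rv (fst (snd q))). pose proof (Cnorm2_nonneg (fst q)). nra. }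
  assert (HWT : W0 <= T0 * N0).
  { unfold N0, W0. rewrite <- fold_scal. apply fold_le. intros q Hq.
    assert (In (fst (snd q)) S) by (rewrite <- ETr; apply in_map; auto).
    pose proof (HT _ H). pose proof (Cnorm2_nonneg (fst q)). nra. }
  set (r := / sqrt W0).
  assert (Hr2 : r ^ 2 = / W0).
  { unfold r. rewrite pow_inv. simpl. rewrite Rmult_1_r. rewrite sqrt_sqrt by lra. auto. }
  assert (Hx : wnorm_le (sob_weight d Rv) (fs (Q r)) 1).
  { split. lra. intros l Hl. eapply Rle_trans. apply (psum_supp _ _ _ S (sob_nonneg d Rv) Hl).
    intros k Hk. apply fs_supp. rewrite HQS; auto. rewrite HpsW, Hr2. field_simplify; lra. }
  destruct (Herr _ (fs_inW Rv _) Hx) as [_ HE]. specialize (HE S HS).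
  rewrite (psum_ext _ _ (fs (Q r))) in HE.
  2:{ intros k. rewrite Az. destruct (fs (Q r) k). unfold Csub, C0; simpl. f_equal; ring. }
  rewrite HpsN, Hr2 in HE.
  assert (0 < T0) by nra.
  apply Rle_trans with (N0 * / W0); [|lra].
  apply Rmult_le_reg_l with (T0 * W0). nra. field_simplify; try lra; try nra.
Qed.

Fixpoint zrange (b : nat) : list Z :=
  match b with 0%nat => 0%Z :: nil | S b' => Z.of_nat (S b') :: (- Z.of_nat (S b'))%Z :: zrange b' end.

Lemma zrange_in b z : In z (zrange b) <-> (Z.abs z <= Z.of_nat b)%Z.
Proof. induction b; simpl. split. intros [H|H]; [subst; simpl; lia|contradiction]. intros; left; lia.
  rewrite IHb. split. intros [H|[H|H]]; lia. intros H.
  destruct (Z.eq_dec (Z.abs z) (Z.of_nat (S b))). destruct (Z.abs_eq_or_opp z); lia. right; right; lia. Qed.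

Lemma zrange_nodup b : NoDup (zrange b).
Proof. induction b; simpl. constructor; [simpl; tauto| constructor].
  constructor. intros [H|H]. lia. apply zrange_in in H; lia.
  constructor. intros H; apply zrange_in in H; lia. auto. Qed.

Lemma zrange_len b : length (zrange b) = (2 * b + 1)%nat.
Proof. induction b; simpl; auto. rewrite IHb. lia. Qed.

Fixpoint box (bf : R -> nat) (rs : list R) : list (list Z) :=
  match rs with nil => nil :: nil
  | r :: rs' => flat_map (fun z => map (cons z) (box bf rs')) (zrange (bf r)) end.

Lemma length_flat_map_cons (Zs : list Z) (L : list (list Z)) :
  length (flat_map (fun z => map (cons z) L) Zs) = (length Zs * length L)%nat.
Proof. induction Zs; simpl; auto. rewrite length_app, length_map, IHZs. lia. Qed.

Lemma box_len bf rs : length (box bf rs) = fold_right (fun r acc => (2 * bf r + 1) * acc)%nat 1%nat rs.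
Proof. induction rs; simpl; auto. rewrite length_flat_map_cons, zrange_len, IHrs. auto. Qed.

Lemma nodup_flat_map_cons (Zs : list Z) (L : list (list Z)) : NoDup Zs -> NoDup L ->
  NoDup (flat_map (fun z => map (cons z) L) Zs).
Proof.
  intros HZ HL. induction HZ as [|z Zs Hz HZ IH]; simpl. constructor.
  apply NoDup_app. apply FinFun.Injective_map_NoDup; auto. intros x y H; injection H; auto. auto.
  intros k Hk Hk'. apply in_map_iff in Hk. destruct Hk as [k1 [E1 _]]. subst.
  apply in_flat_map in Hk'. destruct Hk' as [z' [Hz' Hk']]. apply in_map_iff in Hk'.
  destruct Hk' as [k2 [E2 _]]. injection E2; intros; subst. contradiction.
Qed.

Lemma box_nodup bf rs : NoDup (box bf rs).
Proof. induction rs; simpl. constructor. auto. constructor. apply nodup_flat_map_cons; auto. apply zrange_nodup. Qed.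

Lemma box_in bf rs k : In k (box bf rs) <-> Forall2 (fun z r => (Z.abs z <= Z.of_nat (bf r))%Z) k rs.
Proof.
  revert k; induction rs as [|r rs IH]; intros k; simpl.
  - split. intros [H|H]; [subst; constructor|contradiction]. intros H; inversion H; auto.
  - rewrite in_flat_map. split.
    + intros [z [Hz Hk]]. apply in_map_iff in Hk. destruct Hk as [k' [E Hk']]. subst.
      constructor. apply zrange_in; auto. apply IH; auto.
    + intros H. inversion H; subst. exists x. split. apply zrange_in; auto. apply in_map. apply IH; auto.
Qed.

Fixpoint wsum (rs : list R) (k : list Z) : R :=
  match rs, k with r :: rs', z :: k' => pw (Rabs (IZR z)) (2 * r) + wsum rs' k' | _, _ => 0 end.

Lemma skipn_nth {A} a (k : list A) x : (a < length k)%nat -> skipn a k = nth a k x :: skipn (S a) k.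
Proof. revert k; induction a; intros [|y k] H; simpl in *; try lia; auto. apply IHa; lia. Qed.

Lemma fold_wsum Rv n : forall a (k : list Z), length k = (a + n)%nat ->
  fold_right (fun j acc => pw (Rabs (IZR (nth j k 0%Z))) (2 * Rv j) + acc) 0 (seq a n)
  = wsum (map Rv (seq a n)) (skipn a k).
Proof.
  induction n; intros a k Hk; simpl; auto.
  rewrite (skipn_nth a k 0%Z) by lia. simpl. rewrite IHn by lia. auto.
Qed.

Lemma sob_wsum d Rv (k : Zd d) : sob_weight d Rv k = 1 + wsum (map Rv (seq 0 d)) (proj1_sig k).
Proof. unfold sob_weight. rewrite fold_wsum. auto. destruct k; simpl; lia. Qed.

Definition toZd (d : nat) (k : list Z) : Zd d :=
  match Nat.eq_dec (length k) d with
  | left H => exist _ k H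
  | right _ => exist _ (repeat 0%Z d) (repeat_length _ _) end.

Lemma toZd_val d k : length k = d -> proj1_sig (toZd d k) = k.
Proof. intros H. unfold toZd. destruct Nat.eq_dec; simpl; auto. contradiction. Qed.

Lemma toZd_nodup d (L : list (list Z)) : NoDup L -> (forall k, In k L -> length k = d) -> NoDup (map (toZd d) L).
Proof.
  intros HL Hl. induction HL; simpl. constructor. constructor.
  intros H1. apply in_map_iff in H1. destruct H1 as [y [E Hy]].
  apply (f_equal (@proj1_sig _ _)) in E. rewrite !toZd_val in E by (apply Hl; simpl; auto). subst; contradiction.
  apply IHHL. intros; apply Hl; simpl; auto.
Qed.

Lemma Forall2_length' {A B} (P : A -> B -> Prop) l1 l2 : Forall2 P l1 l2 -> length l1 = length l2.
Proof. induction 1; simpl; auto. Qed.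

Definition rsum (l : list R) : R := fold_right Rplus 0 l.

Lemma rsum_app l1 l2 : rsum (l1 ++ l2) = rsum l1 + rsum l2.
Proof. induction l1; simpl. unfold rsum; simpl; ring. unfold rsum in *; simpl. rewrite IHl1. ring. Qed.

Lemma rsum_scal {A} (f : A -> R) l c : rsum (map (fun x => c * f x) l) = c * rsum (map f l).
Proof. induction l; unfold rsum in *; simpl. ring. rewrite IHl. ring. Qed.

Lemma count_le {A} (P : A -> bool) (phi : A -> R) l :
  (forall x, 0 <= phi x) -> (forall x, P x = true -> 1 <= phi x) ->
  INR (length (filter P l)) <= rsum (map phi l).
Proof.
  intros H0 H1. induction l as [|a l IH]. unfold rsum; simpl; lra.
  unfold rsum in *. cbn [filter map fold_right]. destruct (P a) eqn:E.
  cbn [length]. rewrite S_INR. pose proof (H1 a E). lra. pose proof (H0 a). lra.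
Qed.

Fixpoint prodw (f : R -> Z -> R) (rs : list R) (k : list Z) : R :=
  match rs, k with r :: rs', z :: k' => f r z * prodw f rs' k' | _, _ => 1 end.

Lemma box_sum bf rs (f : R -> Z -> R) :
  rsum (map (prodw f rs) (box bf rs)) = fold_right (fun r acc => rsum (map (f r) (zrange (bf r))) * acc) 1 rs.
Proof.
  induction rs as [|r rs IH]; simpl. unfold rsum; simpl; ring.
  rewrite <- IH. generalize (zrange (bf r)). intros Zs. induction Zs as [|z Zs IHZ]; simpl.
  unfold rsum; simpl; ring.
  rewrite map_app, rsum_app, IHZ. rewrite map_map. simpl. rewrite rsum_scal. unfold rsum; simpl. ring.
Qed.

Lemma exp_wsum lam rs k : length k = length rs ->
  exp (- lam * wsum rs k) = prodw (fun r z => exp (- lam * pw (Rabs (IZR z)) (2 * r))) rs k.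
Proof.
  revert k; induction rs; intros [|z k] H; simpl in *; try lia. rewrite Rmult_0_r, exp_0; auto.
  rewrite <- IHrs by lia. rewrite <- exp_plus. f_equal. ring.
Qed.

Lemma zrange_sum (f : nat -> R) b :
  rsum (map (fun z => f (Z.abs_nat z)) (zrange b)) = f 0%nat + 2 * fold_right (fun m acc => f m + acc) 0 (seq 1 b).
Proof.
  induction b. unfold rsum; simpl. ring.
  unfold rsum in *. cbn [zrange map fold_right]. rewrite IHb. rewrite seq_S. rewrite fold_right_app. cbn [fold_right].
  replace (Z.abs_nat (- Z.of_nat (S b))) with (S b) by lia. replace (Z.abs_nat (Z.of_nat (S b))) with (S b) by lia.
  assert (forall l c, fold_right (fun m acc => f m + acc) c l = fold_right (fun m acc => f m + acc) 0 l + c).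
  { induction l; simpl; intros. ring. rewrite IHl. ring. }
  replace (1 + b)%nat with (S b) by lia. rewrite (H (seq 1 b) (f (S b) + 0)). ring.
Qed.

Lemma Rdiv_le_0_compat a b : 0 <= a -> 0 < b -> 0 <= a / b.
Proof. intros. unfold Rdiv. apply Rmult_le_pos; auto. left; apply Rinv_0_lt_compat; auto. Qed.

Definition fsum (f : nat -> R) (l : list nat) : R := fold_right (fun m acc => f m + acc) 0 l.

Lemma fsum_app f l1 l2 : fsum f (l1 ++ l2) = fsum f l1 + fsum f l2.
Proof. induction l1; unfold fsum in *; simpl. ring. rewrite IHl1. ring. Qed.

Lemma fsum_le f g l : (forall m, In m l -> f m <= g m) -> fsum f l <= fsum g l.
Proof. induction l; unfold fsum in *; simpl; intros H. lra. pose proof (H a (or_introl eq_refl)). pose proof (IHl (fun m Hm => H m (or_intror Hm))). lra. Qed.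

Lemma fsum_nonneg f l : (forall m, 0 <= f m) -> 0 <= fsum f l.
Proof. induction l; unfold fsum in *; simpl; intros H. lra. pose proof (H a). pose proof (IHl H). lra. Qed.

Lemma fsum_le1 f a k : (forall m, f m <= 1) -> fsum f (seq a k) <= INR k.
Proof. revert a; induction k; intros a H; unfold fsum in *; cbn [seq fold_right]. simpl; lra. rewrite S_INR. pose proof (H a). pose proof (IHk (S a) H). lra. Qed.

Lemma split_sum (f : nat -> R) N TB B : (forall m, 0 <= f m) -> (forall m, f m <= 1) ->
  0 <= TB -> (forall k, fsum f (seq (S N) k) <= TB) -> fsum f (seq 1 B) <= INR N + TB.
Proof.
  intros H0 H1 HTB Ht. destruct (le_lt_dec B N).
  - pose proof (fsum_le1 f 1 B H1). apply le_INR in l. lra.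
  - replace B with (N + (B - N))%nat by lia. rewrite seq_app, fsum_app.
    pose proof (fsum_le1 f 1 N H1). replace (1 + N)%nat with (S N) by lia. pose proof (Ht (B - N)%nat). lra.
Qed.

Lemma geom_tail q a k : 0 <= q < 1 -> fsum (fun m => q ^ m) (seq a k) <= q ^ a / (1 - q).
Proof.
  intros Hq. revert a; induction k; intros a; unfold fsum in *; simpl.
  - apply Rdiv_le_0_compat. apply pow_le; lra. lra.
  - pose proof (IHk (S a)). simpl in H. apply Rle_trans with (q ^ a + q * q ^ a / (1 - q)). lra.
    right. field. lra.
Qed.

Lemma invsq_tail a k : (2 <= a)%nat ->
  fsum (fun m => / (INR m) ^ 2) (seq a k) <= / (INR a - 1) - / (INR (a + k) - 1).
Proof.
  revert a; induction k; intros a Ha; unfold fsum in *; cbn [seq fold_right].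
  - rewrite Nat.add_0_r. lra.
  - pose proof (IHk (S a) ltac:(lia)). replace (S a + k)%nat with (a + S k)%nat in H by lia.
    rewrite S_INR in H. apply le_INR in Ha. simpl in Ha.
    assert (/ INR a ^ 2 <= / (INR a - 1) - / INR a).
    { apply Rmult_le_reg_l with (INR a ^ 2 * (INR a - 1)). nra. field_simplify; try lra; try nra. }
    replace (INR a + 1 - 1) with (INR a) in H by ring. lra.
Qed.

Lemma exp_le x y : x <= y -> exp x <= exp y.
Proof. intros [H|H]. left; apply exp_increasing; auto. subst; lra. Qed.

Lemma fsum_scal c g l : fsum (fun m => c * g m) l = c * fsum g l.
Proof. induction l; unfold fsum in *; simpl. ring. rewrite IHl. ring. Qed.

Lemma Rpower_pos x y : 0 < Rpower x y.
Proof. unfold Rpower. apply exp_pos. Qed.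

Lemma Rpower_ge_self x s : 1 <= x -> 1 <= s -> x <= Rpower x s.
Proof. intros. rewrite <- (Rpower_1 x) at 1 by lra. apply Rle_Rpower; auto. Qed.

Lemma Rpower_exp a q : Rpower (exp a) q = exp (q * a).
Proof. unfold Rpower. rewrite ln_exp. auto. Qed.

Lemma Rpower_2 x : 0 < x -> Rpower x 2 = x ^ 2.
Proof. intros. replace 2 with (INR 2) by (simpl; ring). apply Rpower_pow; auto. Qed.

Lemma Rpower_inv_base x q : 0 < x -> Rpower (/ x) q = / Rpower x q.
Proof. intros. unfold Rpower. rewrite ln_Rinv by auto. rewrite <- exp_Ropp. f_equal. ring. Qed.

Lemma exp_ge_et t : exp 1 * t <= exp t.
Proof.
  pose proof (exp_ineq1_le (t - 1)).
  replace t with (1 + (t - 1)) at 2 by ring. rewrite exp_plus. pose proof (exp_pos 1). nra.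
Qed.

Lemma exp_ge_1x x : 1 + x <= exp x.
Proof. apply exp_ineq1_le. Qed.

Lemma e_ge2 : 2 <= exp 1.
Proof. pose proof (exp_ge_1x 1). lra. Qed.

Lemma exp_INR_mul m x : exp (INR m * x) = exp x ^ m.
Proof. induction m. simpl. rewrite Rmult_0_l, exp_0; auto.
  rewrite S_INR. rewrite Rmult_plus_distr_r, Rmult_1_l, exp_plus, IHm. simpl. ring. Qed.

Lemma up_nat (y : R) : 0 < y -> exists N : nat, y < INR N <= y + 1.
Proof.
  intros Hy. destruct (archimed y) as [H1 H2]. assert (0 <= up y)%Z. { apply le_IZR. lra. }
  exists (Z.to_nat (up y)). rewrite INR_IZR_INZ, Z2Nat.id by auto. lra.
Qed.

Lemma floor_nat (y : R) : 0 < y -> exists N : nat, INR N <= y < INR N + 1.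
Proof.
  intros Hy. destruct (archimed y) as [H1 H2]. assert (1 <= up y)%Z. { assert (0 < up y)%Z by (apply lt_IZR; lra). lia. }
  exists (Z.to_nat (up y - 1)). rewrite INR_IZR_INZ, Z2Nat.id by lia. rewrite minus_IZR. change (IZR 1) with 1. lra.
Qed.


Lemma oneD_a s L B : 1 <= s -> 0 < L ->
  fsum (fun m => exp (- Rpower (INR m / L) s)) (seq 1 B) <= L + (1 + L) / exp 1.
Proof.
  intros Hs HL. destruct (floor_nat L HL) as [N [HN1 HN2]].
  set (q := exp (- / L)).
  assert (HiL : 0 < / L) by (apply Rinv_0_lt_compat; auto).
  assert (Hq : 0 <= q < 1). { unfold q. split. left; apply exp_pos. rewrite <- exp_0. apply exp_increasing. lra. }
  assert (H1q : / (1 - q) <= 1 + L).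
  { assert (1 + / L <= exp (/ L)) by apply exp_ge_1x.
    assert (q * exp (/ L) = 1). { unfold q. rewrite <- exp_plus. replace (- / L + / L) with 0 by ring. apply exp_0. }
    assert (q * (1 + / L) <= 1) by nra.
    assert (Hq1 : q * (1 + L) <= L). { apply Rmult_le_reg_r with (/ L). auto.
      replace (q * (1 + L) * / L) with (q * (1 + / L)) by (field; lra). replace (L * / L) with 1 by (field; lra). auto. }
    assert (0 < 1 - q) by lra.
    apply Rmult_le_reg_r with (1 - q). lra. rewrite Rinv_l by lra. nra. }
  assert (HqN : q ^ (S N) <= / exp 1).
  { unfold q. rewrite <- exp_INR_mul. rewrite <- exp_Ropp. apply exp_le. rewrite S_INR.
    apply Rmult_le_reg_r with L. auto. replace ((INR N + 1) * - / L * L) with (-(INR N + 1)) by (field; lra). lra. }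
  eapply Rle_trans.
  apply (split_sum _ N (q ^ (S N) / (1 - q))).
  - intros; left; apply exp_pos.
  - intros m. rewrite <- exp_0. apply exp_le. pose proof (Rpower_pos (INR m / L) s). lra.
  - apply Rdiv_le_0_compat. apply pow_le; lra. lra.
  - intros k. eapply Rle_trans; [|apply (geom_tail q (S N) k Hq)].
    apply fsum_le. intros m Hm. apply in_seq in Hm.
    assert (HmL : L < INR m). { assert (INR (S N) <= INR m) by (apply le_INR; lia). rewrite S_INR in H. lra. }
    assert (1 <= INR m / L). { apply Rmult_le_reg_r with L; auto. unfold Rdiv. rewrite Rmult_assoc, Rinv_l by lra. lra. }
    pose proof (Rpower_ge_self _ _ H Hs).
    unfold q. rewrite <- exp_INR_mul. apply exp_le. unfold Rdiv in H0. lra.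
  - assert (q ^ S N / (1 - q) <= / exp 1 * (1 + L)).
    { unfold Rdiv. apply Rmult_le_compat; auto. apply pow_le; lra. left; apply Rinv_0_lt_compat; lra. }
    unfold Rdiv. lra.
Qed.

Lemma key_exp y q : 0 < y -> 0 < q -> exp (- y) <= Rpower (q / exp 1) q / Rpower y q.
Proof.
  intros Hy Hq. pose proof (exp_pos 1) as He.
  assert (H1 : Rpower (exp 1 * y / q) q <= exp y).
  { replace (exp y) with (Rpower (exp (y / q)) q) by (rewrite Rpower_exp; f_equal; field; lra).
    apply Rle_Rpower_l. lra. split. apply Rdiv_lt_0_compat; nra. 
    replace (exp 1 * y / q) with (exp 1 * (y / q)) by (field; lra). apply exp_ge_et. }
  replace (exp 1 * y / q) with (exp 1 / q * y) in H1 by (field; lra).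
  rewrite <- (Rpower_mult_distr (exp 1 / q) y q) in H1 by (try apply Rdiv_lt_0_compat; lra).
  replace (exp 1 / q) with (/ (q / exp 1)) in H1 by (field; lra).
  rewrite Rpower_inv_base in H1 by (apply Rdiv_lt_0_compat; lra).
  pose proof (Rpower_pos (q / exp 1) q). pose proof (Rpower_pos y q).
  set (P := Rpower (q / exp 1) q) in *. set (Yq := Rpower y q) in *.
  rewrite exp_Ropp. replace (P / Yq) with (/ (/ P * Yq)) by (field; lra).
  apply Rinv_le_contravar. apply Rmult_lt_0_compat; auto. apply Rinv_0_lt_compat; auto. auto.
Qed.

Lemma oneD_b s L B : 0 < s -> 0 < L ->
  fsum (fun m => exp (- Rpower (INR m / L) s)) (seq 1 B) <= 2 * Rpower (2 / (s * exp 1)) (/ s) * L + 1.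
Proof.
  intros Hs HL. pose proof (exp_pos 1) as He.
  set (K := Rpower (2 / (s * exp 1)) (/ s)).
  assert (HK : 0 < K) by apply Rpower_pos.
  assert (HK2 : K ^ 2 = Rpower (2 / s / exp 1) (2 / s)).
  { unfold K. rewrite <- Rpower_2 by apply Rpower_pos. rewrite Rpower_mult. f_equal. field; lra. field; lra. }
  assert (Hpt : forall m, (1 <= m)%nat -> exp (- Rpower (INR m / L) s) <= K ^ 2 * L ^ 2 * / INR m ^ 2).
  { intros m Hm. assert (Hm' : 0 < INR m) by (apply lt_0_INR; lia).
    assert (Hy : 0 < Rpower (INR m / L) s) by apply Rpower_pos.
    pose proof (key_exp _ (2 / s) Hy ltac:(apply Rdiv_lt_0_compat; lra)).
    rewrite Rpower_mult in H. replace (s * (2 / s)) with 2 in H by (field; lra).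
    rewrite Rpower_2 in H by (apply Rdiv_lt_0_compat; lra). rewrite <- HK2 in H.
    eapply Rle_trans. apply H. right. field. split; lra. }
  assert (HKL : 0 < K * L) by nra.
  destruct (up_nat (K * L) HKL) as [N [HN1 HN2]].
  assert (HN : (1 <= N)%nat). { destruct N. simpl in HN1. lra. lia. }
  eapply Rle_trans.
  apply (split_sum _ N (K ^ 2 * L ^ 2 / INR N)).
  - intros; left; apply exp_pos.
  - intros m. rewrite <- exp_0. apply exp_le. pose proof (Rpower_pos (INR m / L) s). lra.
  - apply Rdiv_le_0_compat. nra. lra.
  - intros k. eapply Rle_trans. apply fsum_le. intros m Hm. apply in_seq in Hm. apply Hpt. lia.
    rewrite fsum_scal. pose proof (invsq_tail (S N) k ltac:(lia)).
    assert (0 < INR (S N + k) - 1). { assert (2 <= INR (S N + k)). { replace 2 with (INR 2) by (simpl; ring). apply le_INR. lia. } lra. }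
    pose proof (Rinv_0_lt_compat _ H0). rewrite S_INR in H. replace (INR N + 1 - 1) with (INR N) in H by ring.
    unfold Rdiv. apply Rmult_le_compat_l. nra. lra.
  - assert (K ^ 2 * L ^ 2 / INR N <= K * L).
    { apply Rmult_le_reg_r with (INR N). lra. unfold Rdiv. rewrite Rmult_assoc, Rinv_l by lra. nra. }
    lra.
Qed.

Lemma coord_a s L a b B : 1 <= s -> 0 < L -> a = L * b -> 8 <= a -> 4 <= b ->
  1 + 2 * fsum (fun m => exp (- Rpower (INR m / L) s)) (seq 1 B) <= a.
Proof.
  intros Hs HL Hab Ha Hb. pose proof (oneD_a s L B Hs HL). pose proof e_ge2.
  assert ((1 + L) / exp 1 <= (1 + L) / 2).
  { unfold Rdiv. apply Rmult_le_compat_l. lra. apply Rinv_le_contravar; lra. }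
  assert (L <= a / 4). { subst a. apply Rmult_le_reg_r with 4. lra. field_simplify. nra. }
  lra.
Qed.

Lemma Rpower_le_1 c x : 0 < c < 1 -> 1 <= x -> Rpower c x <= c.
Proof.
  intros Hc Hx. unfold Rpower. rewrite <- (exp_ln c) at 2 by lra.
  apply exp_le. assert (ln c < 0). { rewrite <- ln_1. apply ln_increasing; lra. } nra.
Qed.

Lemma Rpower_div a b x : 0 < a -> 0 < b -> Rpower (a / b) x = Rpower a x / Rpower b x.
Proof. intros. unfold Rdiv. rewrite <- Rpower_mult_distr by (try apply Rinv_0_lt_compat; auto).
  rewrite Rpower_inv_base by auto. auto. Qed.

Lemma small_c x : 1 <= x -> Rpower (x / (exp 1 * (2 + x))) x <= 5 / 16.
Proof.
  intros Hx. pose proof e_ge2. pose proof (exp_pos 1).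
  assert (Hc : 0 < x / (exp 1 * (2 + x))) by (apply Rdiv_lt_0_compat; nra).
  destruct (Rle_dec x 2).
  - assert (x / (exp 1 * (2 + x)) <= 1 / 4).
    { apply Rmult_le_reg_r with (exp 1 * (2 + x)). nra. field_simplify; nra. }
    pose proof (Rpower_le_1 (x / (exp 1 * (2 + x))) x ltac:(lra) Hx). lra.
  - assert (x / (exp 1 * (2 + x)) <= / exp 1).
    { apply Rmult_le_reg_r with (exp 1 * (2 + x)). nra. field_simplify; nra. }
    pose proof (Rle_Rpower_l _ _ x ltac:(lra) (conj Hc H1)).
    rewrite Rpower_inv_base in H2 by lra. unfold Rpower at 2 in H2. rewrite ln_exp in H2.
    assert (exp (x * 1) >= exp 2) by (apply Rle_ge, exp_le; lra).
    assert (exp 2 = exp 1 * exp 1) by (rewrite <- exp_plus; f_equal; ring).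
    assert (/ exp (x * 1) <= / exp 2) by (apply Rinv_le_contravar; [apply exp_pos|lra]).
    assert (/ exp 2 <= / 4) by (apply Rinv_le_contravar; nra). lra.
Qed.

Lemma coord_b s L a b B : 0 < s < 1 -> 0 < L -> a = L * b ->
  2 * Rpower 4 (/ s) <= a -> 2 * Rpower (4 + 2 * / s) (/ s) <= b ->
  1 + 2 * fsum (fun m => exp (- Rpower (INR m / L) s)) (seq 1 B) <= a.
Proof.
  intros Hs HL Hab Ha Hb. pose proof (oneD_b s L B ltac:(lra) HL). pose proof e_ge2. pose proof (exp_pos 1).
  set (x := / s) in *.
  assert (Hx : 1 <= x). { unfold x. rewrite <- Rinv_1. apply Rinv_le_contravar; lra. }
  set (K := Rpower (2 / (s * exp 1)) x) in *.
  assert (HK : 0 < K) by apply Rpower_pos.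
  assert (H4x : 4 <= Rpower 4 x). { rewrite <- (Rpower_1 4) at 1 by lra. apply Rle_Rpower; lra. }
  assert (Hbpos : 0 < b) by (pose proof (Rpower_pos (4 + 2 * x) x); lra).
  assert (HKb : 4 * K <= 5 / 8 * b).
  { assert (K = Rpower (2 * x / exp 1) x) by (unfold K; f_equal; unfold x; field; lra).
    assert (Rpower (2 * x / exp 1) x / Rpower (4 + 2 * x) x = Rpower (x / (exp 1 * (2 + x))) x).
    { rewrite <- Rpower_div. f_equal. field. lra. apply Rdiv_lt_0_compat; lra. lra. }
    pose proof (small_c x Hx). pose proof (Rpower_pos (4 + 2 * x) x).
    assert (K <= 5/16 * Rpower (4 + 2 * x) x).
    { rewrite H2. apply Rmult_le_reg_r with (/ Rpower (4 + 2 * x) x). apply Rinv_0_lt_compat; auto.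
      replace (5 / 16 * Rpower (4 + 2 * x) x * / Rpower (4 + 2 * x) x) with (5/16) by (field; lra). unfold Rdiv in H3. lra. }
    lra. }
  assert (4 * K * L <= 5 / 8 * a) by (subst a; nra).
  lra.
Qed.

Lemma fmax_ge (Rv : nat -> R) l j : In j l \/ j = 0%nat ->
  Rv j <= fold_right (fun j acc => Rmax (Rv j) acc) (Rv 0%nat) l.
Proof. induction l; simpl; intros [H|H]; subst; try lra; try contradiction.
  destruct H. subst. apply Rmax_l. eapply Rle_trans. apply IHl; auto. apply Rmax_r.
  eapply Rle_trans. apply IHl; auto. apply Rmax_r. Qed.

Lemma fmin_le (Rv : nat -> R) l j : In j l \/ j = 0%nat ->
  fold_right (fun j acc => Rmin (Rv j) acc) (Rv 0%nat) l <= Rv j.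
Proof. induction l; simpl; intros [H|H]; subst; try lra; try contradiction.
  destruct H. subst. apply Rmin_l. eapply Rle_trans. apply Rmin_r. apply IHl; auto.
  eapply Rle_trans. apply Rmin_r. apply IHl; auto. Qed.

Lemma fmin_pos (Rv : nat -> R) l : 0 < Rv 0%nat -> (forall j, In j l -> 0 < Rv j) ->
  0 < fold_right (fun j acc => Rmin (Rv j) acc) (Rv 0%nat) l.
Proof. induction l; simpl; intros H0 H; auto. apply Rmin_glb_lt; auto. Qed.

Lemma fsumR_bounds (Rv : nat -> R) l v u : 0 < v -> (forall j, In j l -> v <= Rv j <= u) ->
  INR (length l) / u <= fold_right (fun j acc => / Rv j + acc) 0 l <= INR (length l) / v.
Proof.
  intros Hv. induction l; cbn [length fold_right]; intros H. simpl; unfold Rdiv; lra.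
  destruct (H a (or_introl eq_refl)). rewrite S_INR.
  destruct (IHl (fun j Hj => H j (or_intror Hj))).
  assert (/ Rv a <= / v) by (apply Rinv_le_contravar; lra).
  assert (/ u <= / Rv a) by (apply Rinv_le_contravar; lra).
  unfold Rdiv in *. lra.
Qed.

Lemma lincomb_fs {d} (x : seqC d) (F : list (Zd d)) k :
  lincomb (map x F) (map ev F) k = fs (map (fun k' => (x k', k')) F) k.
Proof. induction F; simpl; auto. unfold lincomb in *. simpl. rewrite IHF. reflexivity. Qed.

Lemma proj_ok d Rv n T (F : list (Zd d)) : 0 < T -> NoDup F -> (length F < n)%nat ->
  (forall k, sob_weight d Rv k < T -> In k F) -> approx_set d Rv n (/ sqrt T).
Proof.
  intros HT HF Hn Hc.
  exists (fun x k => if in_dec Zd_dec k F then x k else C0). split; [split; [|split]|].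
  - intros x _. apply (inwl2_supp _ _ F). apply one_nonneg. intros k Hk. destruct in_dec; tauto.
  - intros x y a b _ _ k. destruct in_dec; auto. cring.
  - exists (map ev F). split. rewrite length_map; auto.
    intros x _. exists (map x F). split. rewrite !length_map; auto.
    intros k. rewrite lincomb_fs. destruct in_dec.
    + symmetry. apply (fs_val (map (fun k' => (x k', k')) F) (x k, k)).
      rewrite map_map. simpl. rewrite map_id. auto. apply in_map_iff. exists k; auto.
    + symmetry. apply fs_supp. rewrite map_map. simpl. rewrite map_id. auto.
  - split. left. apply Rinv_0_lt_compat, sqrt_lt_R0; auto.
    intros x Hx [_ Hw]. split. left. apply Rinv_0_lt_compat, sqrt_lt_R0; auto.
    intros l Hl. specialize (Hw l Hl).
    assert (psum (one_weight d) (fun k => Csub (x k) (if in_dec Zd_dec k F then x k else C0)) l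
            <= / T * psum (sob_weight d Rv) x l).
    { clear Hl Hw. induction l; simpl. lra.
      assert (one_weight d a * Cnorm2 (Csub (x a) (if in_dec Zd_dec a F then x a else C0)) <= / T * (sob_weight d Rv a * Cnorm2 (x a))).
      { unfold one_weight. destruct in_dec.
        - replace (Csub (x a) (x a)) with C0 by cring. rewrite Cnorm2_0. pose proof (sob_nonneg d Rv a). pose proof (Cnorm2_nonneg (x a)).
          pose proof (Rinv_0_lt_compat _ HT). rewrite Rmult_0_r. apply Rmult_le_pos. lra. apply Rmult_le_pos. auto. apply Cnorm2_nonneg.
        - replace (Csub (x a) C0) with (x a) by cring. assert (T <= sob_weight d Rv a).
          { destruct (Rlt_dec (sob_weight d Rv a) T); [exfalso; apply n0; auto|lra]. }
          pose proof (Cnorm2_nonneg (x a)). apply Rmult_le_reg_l with T; auto.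
          replace (T * (/ T * (sob_weight d Rv a * Cnorm2 (x a)))) with (sob_weight d Rv a * Cnorm2 (x a)) by (field; lra). nra. }
      unfold psum in *. simpl. lra. }
    rewrite pow_inv. simpl. rewrite Rmult_1_r, sqrt_sqrt by lra. simpl in Hw.
    pose proof (Rinv_0_lt_compat _ HT). nra.
Qed.

Lemma wsum_nonneg rs k : 0 <= wsum rs k.
Proof. revert k; induction rs; intros [|z k]; simpl; try lra. pose proof (pw_nonneg (Rabs (IZR z)) (2 * a)). pose proof (IHrs k). lra. Qed.

Lemma wsum_forall (P : Z -> R -> Prop) rs k c : length k = length rs ->
  (forall z r, In r rs -> pw (Rabs (IZR z)) (2 * r) < c -> P z r) -> wsum rs k < c -> Forall2 P k rs.
Proof.
  revert k; induction rs as [|r rs IH]; intros [|z k] Hl HP Hw; simpl in *; try lia. constructor.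
  pose proof (pw_nonneg (Rabs (IZR z)) (2 * r)). pose proof (wsum_nonneg rs k).
  constructor. apply HP. left; auto. lra. apply IH. lia. intros z' r' Hr' Hz'. apply HP. right; auto. auto. lra.
Qed.

Lemma wsum_le rs k c : Forall2 (fun z r => pw (Rabs (IZR z)) (2 * r) <= c) k rs -> wsum rs k <= INR (length rs) * c.
Proof. induction 1; cbn [wsum length]. simpl; lra. rewrite S_INR. lra. Qed.

Lemma Rabs_IZR_nat z : Rabs (IZR z) = INR (Z.abs_nat z).
Proof. rewrite INR_IZR_INZ. rewrite Nat2Z.inj_abs_nat. apply Rabs_Zabs. Qed.

Lemma fsum_ext_in f g l : (forall m, In m l -> f m = g m) -> fsum f l = fsum g l.
Proof. induction l; unfold fsum in *; simpl; intros H; auto. rewrite H by auto. rewrite IHl; auto. Qed.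

Lemma INR_prod (f : R -> nat) rs : INR (fold_right (fun r acc => (f r * acc)%nat) 1%nat rs) = fold_right (fun r acc => INR (f r) * acc) 1 rs.
Proof. induction rs; simpl. auto. rewrite mult_INR, IHrs. auto. Qed.

Lemma prod_le (f g : R -> R) rs : (forall r, In r rs -> 0 <= f r <= g r) ->
  fold_right (fun r acc => f r * acc) 1 rs <= fold_right (fun r acc => g r * acc) 1 rs.
Proof.
  induction rs; simpl; intros H. lra.
  assert (0 <= fold_right (fun r acc => f r * acc) 1 rs).
  { clear -H. induction rs; simpl. lra. apply Rmult_le_pos. apply H; simpl; auto. apply IHrs. intros; apply H; simpl in *; tauto. }
  destruct (H a (or_introl eq_refl)). apply Rmult_le_compat; auto.
Qed.

Lemma count_F d Rv T lam B : 0 < T -> 0 < lam -> (forall j, (j < d)%nat -> 0 < Rv j) ->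
  (forall j, (j < d)%nat -> Rpower T (/ (2 * Rv j)) <= INR B) ->
  exists F : list (Zd d), NoDup F /\
    INR (length F) <= exp (lam * (T - 1)) *
      fold_right (fun r acc => (1 + 2 * fsum (fun m => exp (- lam * Rpower (INR m) (2 * r))) (seq 1 B)) * acc) 1 (map Rv (seq 0 d))
    /\ forall k, sob_weight d Rv k < T -> In k F.
Proof.
  intros HT Hlam Hpos HB. set (rs := map Rv (seq 0 d)).
  assert (Hrs : forall r, In r rs -> 0 < r /\ Rpower T (/ (2 * r)) <= INR B).
  { intros r Hr. unfold rs in Hr. apply in_map_iff in Hr. destruct Hr as [j [E Hj]]. apply in_seq in Hj. subst. split; apply Hpos || apply HB; lia. }
  set (P := fun k => if Rlt_dec (1 + wsum rs k) T then true else false).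
  set (bx := box (fun _ => B) rs).
  assert (Hbl : forall k, In k bx -> length k = d).
  { intros k Hk. apply box_in in Hk. apply Forall2_length' in Hk. unfold rs in Hk. rewrite length_map, length_seq in Hk. auto. }
  exists (map (toZd d) (filter P bx)). split; [|split].
  - apply toZd_nodup. apply NoDup_filter, box_nodup. intros k Hk. apply filter_In in Hk. apply Hbl; tauto.
  - rewrite length_map.
    eapply Rle_trans. apply (count_le P (fun k => exp (lam * (T - 1 - wsum rs k)))).
    + intros; left; apply exp_pos.
    + intros k Hk. unfold P in Hk. destruct Rlt_dec as [Hlt|]; [|discriminate]. apply Rle_trans with (exp 0); [rewrite exp_0; lra|]. apply exp_le. apply Rmult_le_pos; lra.
    + rewrite (map_ext_in _ (fun k => exp (lam * (T - 1)) * prodw (fun r z => exp (- lam * pw (Rabs (IZR z)) (2 * r))) rs k)).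
      2:{ intros k Hk. rewrite <- exp_wsum. rewrite <- exp_plus. f_equal. ring. rewrite Hbl by auto. unfold rs. rewrite length_map, length_seq; auto. }
      rewrite rsum_scal. unfold bx. rewrite box_sum. right. f_equal.
      clear -Hrs. induction rs as [|r rs IH]; simpl. auto. f_equal.
      2: apply IH; intros; apply Hrs; simpl; auto.
      rewrite (map_ext _ (fun z => (fun m => exp (- lam * pw (INR m) (2 * r))) (Z.abs_nat z))).
      2:{ intros z. rewrite Rabs_IZR_nat. auto. }
      rewrite (zrange_sum (fun m => exp (- lam * pw (INR m) (2 * r))) B). f_equal. unfold pw at 1. simpl. destruct Req_EM_T; [|lra]. rewrite Rmult_0_r, exp_0. auto.
      f_equal. apply fsum_ext_in. intros m Hm. apply in_seq in Hm. unfold pw. destruct Req_EM_T; auto.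
      assert (0 < INR m) by (apply lt_0_INR; lia). lra.
  - intros k Hk. rewrite sob_wsum in Hk.
    assert (Hk' : In (proj1_sig k) bx).
    { apply box_in. apply (wsum_forall _ _ _ T).
      destruct k; simpl. unfold rs. rewrite length_map, length_seq. auto.
      intros z r Hr Hz. destruct (Hrs r Hr) as [Hr0 HrB].
      destruct (Z.eq_dec z 0). subst. simpl. lia.
      assert (Ht : 0 < Rabs (IZR z)). { apply Rabs_pos_lt. apply not_0_IZR; auto. }
      unfold pw in Hz. destruct Req_EM_T; [lra|].
      assert (Rabs (IZR z) < Rpower T (/ (2 * r))).
      { rewrite <- (Rpower_1 (Rabs (IZR z))) by auto. replace 1 with (2 * r * / (2 * r)) by (field; lra).
        rewrite <- Rpower_mult. apply Rlt_Rpower_l. apply Rinv_0_lt_compat; lra. split; auto. apply Rpower_pos. }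
      rewrite Rabs_Zabs in H. rewrite INR_IZR_INZ in HrB. apply Z.lt_le_incl. apply lt_IZR. lra. fold rs in Hk. lra. }
    apply in_map_iff. exists (proj1_sig k). split.
    + apply Zd_eq. rewrite toZd_val; auto. destruct k; auto.
    + apply filter_In. split; auto. unfold P. destruct Rlt_dec; auto.
Qed.

Lemma floor_prop (y : R) : 0 < y -> INR (Z.to_nat (up y - 1)) <= y < INR (Z.to_nat (up y - 1)) + 1.
Proof.
  intros Hy. destruct (archimed y) as [H1 H2]. assert (1 <= up y)%Z. { assert (0 < up y)%Z by (apply lt_IZR; lra). lia. }
  rewrite INR_IZR_INZ, Z2Nat.id by lia. rewrite minus_IZR. change (IZR 1) with 1. lra.
Qed.

Lemma NoDup_firstn {A} (l : list A) k : NoDup l -> NoDup (firstn k l).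
Proof. intros H. rewrite <- (firstn_skipn k l) in H. apply NoDup_app_remove_r in H. auto. Qed.

Lemma in_firstn {A} (l : list A) k x : In x (firstn k l) -> In x l.
Proof. intros H. rewrite <- (firstn_skipn k l). apply in_or_app; auto. Qed.

Lemma LB_points d Rv n Y : (forall j, (j < d)%nat -> 0 < Rv j) -> 0 < Y ->
  INR n <= fold_right (fun r acc => Rpower Y (/ (2 * r)) * acc) 1 (map Rv (seq 0 d)) ->
  exists S : list (Zd d), NoDup S /\ length S = n /\ forall k, In k S -> sob_weight d Rv k <= 1 + INR d * Y.
Proof.
  intros Hpos HY Hn. set (rs := map Rv (seq 0 d)).
  assert (Hrs : forall r, In r rs -> 0 < r).
  { intros r Hr. unfold rs in Hr. apply in_map_iff in Hr. destruct Hr as [j [E Hj]]. apply in_seq in Hj. subst. apply Hpos; lia. }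
  set (bf := fun r => Z.to_nat (up (Rpower Y (/ (2 * r))) - 1)).
  set (bx := box bf rs).
  assert (Hbl : forall k, In k bx -> length k = d).
  { intros k Hk. apply box_in in Hk. apply Forall2_length' in Hk. unfold rs in Hk. rewrite length_map, length_seq in Hk. auto. }
  assert (Hlen : (n <= length bx)%nat).
  { apply INR_le. unfold bx. rewrite box_len, INR_prod. eapply Rle_trans. apply Hn. apply prod_le.
    intros r Hr. split. left; apply Rpower_pos. pose proof (floor_prop _ (Rpower_pos Y (/ (2 * r)))).
    fold (bf r) in H. rewrite plus_INR, mult_INR. simpl. pose proof (pos_INR (bf r)). destruct (Rle_dec 1 (Rpower Y (/ (2 * r)))); lra. }
  exists (firstn n (map (toZd d) bx)). split; [|split].
  - apply NoDup_firstn. apply toZd_nodup. apply box_nodup. auto.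
  - rewrite length_firstn, length_map. lia.
  - intros k Hk. apply in_firstn in Hk. apply in_map_iff in Hk. destruct Hk as [k' [E Hk']].
    assert (Hv : proj1_sig k = k') by (subst k; apply toZd_val; auto).
    rewrite sob_wsum. fold rs. rewrite Hv.
    assert (wsum rs k' <= INR (length rs) * Y).
    { apply wsum_le. apply box_in in Hk'. 
      assert (Hal : forall r, In r rs -> 0 < r) by auto. clear -Hk' Hal HY.
      induction Hk'; constructor.
      - destruct (Z.eq_dec x 0). subst. unfold pw. simpl. rewrite Rabs_R0. destruct Req_EM_T; lra.
        assert (Ht : 0 < Rabs (IZR x)). { apply Rabs_pos_lt. apply not_0_IZR; auto. }
        unfold pw. destruct Req_EM_T; [lra|].
        pose proof (Hal y (or_introl eq_refl)).
        pose proof (floor_prop _ (Rpower_pos Y (/ (2 * y)))). fold (bf y) in H1.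
        assert (Rabs (IZR x) <= Rpower Y (/ (2 * y))).
        { rewrite Rabs_Zabs. apply Rle_trans with (INR (bf y)); [|lra]. rewrite INR_IZR_INZ. apply IZR_le. auto. }
        eapply Rle_trans. apply Rle_Rpower_l. lra. split. apply Ht. apply H2.
        rewrite Rpower_mult. replace (/ (2 * y) * (2 * y)) with 1 by (field; lra). rewrite Rpower_1; lra.
      - apply IHHk'. intros; apply Hal; simpl; auto. }
    unfold rs in *. rewrite length_map, length_seq in H. lra.
Qed.

Lemma Rpower_ge1 b c : 1 <= b -> 0 <= c -> 1 <= Rpower b c.
Proof. intros. rewrite <- (Rpower_O b) by lra. apply Rle_Rpower; auto. Qed.

Lemma Rpower_mul_base x y c : 0 < x -> 0 < y -> Rpower (x * y) c = Rpower x c * Rpower y c.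
Proof. intros. rewrite Rpower_mult_distr; auto. Qed.

Lemma Rpower_exp1 c : Rpower (exp 1) c = exp c.
Proof. rewrite Rpower_exp. f_equal; ring. Qed.

Lemma Rpower_le1 T c : 0 < T <= 1 -> 0 <= c -> Rpower T c <= 1.
Proof. intros HT Hc. unfold Rpower. rewrite <- exp_0. apply exp_le.
  assert (ln T <= 0). { rewrite <- ln_1. destruct (Req_dec T 1). subst; lra. left; apply ln_increasing; lra. } nra. Qed.

Lemma prod_rpower Y (Rv : nat -> R) l : 0 < Y -> (forall j, In j l -> 0 < Rv j) ->
  fold_right (fun r acc => Rpower Y (/ (2 * r)) * acc) 1 (map Rv l)
  = Rpower Y (fold_right (fun j acc => / Rv j + acc) 0 l / 2).
Proof.
  intros HY. induction l; simpl; intros H. replace (0 / 2) with 0 by field. rewrite Rpower_O; auto.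
  rewrite IHl by auto. rewrite <- Rpower_plus. f_equal. pose proof (H a (or_introl eq_refl)). field. lra.
Qed.

Lemma prod_const (f : R -> R) c rs :
  fold_right (fun r acc => (c * f r) * acc) 1 rs = c ^ length rs * fold_right (fun r acc => f r * acc) 1 rs.
Proof. induction rs; simpl. ring. rewrite IHrs. ring. Qed.

Lemma prod_pos (f : R -> R) rs : (forall r, In r rs -> 0 < f r) -> 0 < fold_right (fun r acc => f r * acc) 1 rs.
Proof. induction rs; simpl; intros H. lra. apply Rmult_lt_0_compat; auto. Qed.

Lemma Sg_bounds d Rv u v : 0 < v -> (forall j, (j < d)%nat -> v <= Rv j <= u) ->
  INR d / u <= fold_right (fun j acc => / Rv j + acc) 0 (seq 0 d) <= INR d / v.
Proof.
  intros Hv H. pose proof (fsumR_bounds Rv (seq 0 d) v u Hv). rewrite length_seq in H0. apply H0.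
  intros j Hj. apply in_seq in Hj. apply H. lia.
Qed.

Lemma pos_seq (Rv : nat -> R) d : (forall j, (j < d)%nat -> 0 < Rv j) -> forall j, In j (seq 0 d) -> 0 < Rv j.
Proof. intros H j Hj. apply in_seq in Hj. apply H; lia. Qed.

Lemma lower_main d Rv n a u v p : (1 <= d)%nat -> (forall j, (j < d)%nat -> 0 < Rv j) -> 1 <= INR n ->
  is_approx_number d Rv n a -> 0 < v -> v <= u -> v <= p -> (forall j, (j < d)%nat -> v <= Rv j <= u) ->
  Rpower 2 (v - p) * sqrt (1 / (exp 1 * (INR d + 2 * u))) <= Rpower (INR n) (gR d Rv) * a.
Proof.
  intros Hd Hpos Hn Ha Hv Hvu Hvp Hb.
  set (Sg := fold_right (fun j acc => / Rv j + acc) 0 (seq 0 d)).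
  assert (Hdr : 1 <= INR d) by (replace 1 with (INR 1) by auto; apply le_INR; auto).
  assert (HSg : 0 < Sg).
  { destruct (Sg_bounds d Rv u v Hv Hb). fold Sg in H. assert (0 < INR d / u) by (apply Rdiv_lt_0_compat; lra). lra. }
  assert (Hg : gR d Rv = / Sg) by reflexivity.
  pose proof e_ge2 as He.
  set (g := gR d Rv) in *.
  set (Y := Rpower (INR n) (2 * g)).
  assert (HY1 : 1 <= Y). { apply Rpower_ge1; auto. rewrite Hg. left; apply Rmult_lt_0_compat; [lra|apply Rinv_0_lt_compat; auto]. }
  set (ng := Rpower (INR n) g).
  assert (Hng : ng ^ 2 = Y). { unfold ng, Y. rewrite <- Rpower_2 by apply Rpower_pos. rewrite Rpower_mult. f_equal; ring. }
  assert (Hngp : 0 < ng) by apply Rpower_pos.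
  set (lo := Rpower 2 (v - p) * sqrt (1 / (exp 1 * (INR d + 2 * u)))).
  assert (Hlo0 : 0 <= lo). { unfold lo. apply Rmult_le_pos. left; apply Rpower_pos. apply sqrt_pos. }
  assert (Hlo2 : lo ^ 2 <= 1 / (exp 1 * (INR d + 2 * u))).
  { unfold lo. rewrite Rpow_mult_distr. rewrite pow2_sqrt.
    2: { apply Rdiv_le_0_compat. lra. apply Rmult_lt_0_compat; lra. }
    assert (Rpower 2 (v - p) <= 1). { rewrite <- (Rpower_O 2) by lra. apply Rle_Rpower; lra. }
    assert (0 < Rpower 2 (v - p)) by apply Rpower_pos.
    assert (0 <= 1 / (exp 1 * (INR d + 2 * u))) by (apply Rdiv_le_0_compat; [lra|apply Rmult_lt_0_compat; lra]).
    assert (Rpower 2 (v - p) ^ 2 <= 1) by nra. nra. }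
  assert (HM : forall M, approx_set d Rv n M -> lo / ng <= M).
  { intros M [A [Hadm Herr]].
    assert (HnY : INR n <= fold_right (fun r acc => Rpower Y (/ (2 * r)) * acc) 1 (map Rv (seq 0 d))).
    { rewrite prod_rpower by (lra || apply pos_seq; auto). fold Sg. unfold Y. rewrite Rpower_mult.
      replace (2 * g * (Sg / 2)) with 1. rewrite Rpower_1; lra. rewrite Hg. field. lra. }
    destruct (LB_points d Rv n Y Hpos ltac:(lra) HnY) as [S [HS [HSn HSw]]].
    pose proof (LB_core d Rv n S (1 + INR d * Y) A M HS HSn HSw Hadm Herr).
    destruct Herr as [HM0 _].
    assert ((lo / ng) ^ 2 <= M ^ 2).
    { eapply Rle_trans; [|apply H]. unfold Rdiv. rewrite Rpow_mult_distr, pow_inv, Hng.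
      assert (0 < exp 1 * (INR d + 2 * u)) by (apply Rmult_lt_0_compat; lra).
      apply Rle_trans with (1 / (exp 1 * (INR d + 2 * u)) * / Y).
      apply Rmult_le_compat_r. left; apply Rinv_0_lt_compat; lra. auto.
      replace (1 / (exp 1 * (INR d + 2 * u)) * / Y) with (/ (exp 1 * (INR d + 2 * u) * Y)) by (field; lra).
      assert (2 * INR d <= exp 1 * (INR d + 2 * u)) by nra. apply Rinv_le_contravar. nra. nra. }
    assert (0 <= lo / ng) by (apply Rdiv_le_0_compat; lra).
    nra. }
  destruct Ha as [_ Ha2]. pose proof (Ha2 _ HM).
  apply Rmult_le_reg_r with (/ ng). apply Rinv_0_lt_compat; auto.
  replace (ng * a * / ng) with a by (field; lra). fold lo. unfold Rdiv in H. auto.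
Qed.

Lemma Rpower_ge1_ b c : 1 <= b -> 0 <= c -> 1 <= Rpower b c.
Proof. intros. rewrite <- (Rpower_O b) by lra. apply Rle_Rpower; auto. Qed.

Lemma Rp_exp_le b c1 c2 : 1 <= b -> c1 <= c2 -> Rpower b c1 <= Rpower b c2.
Proof. intros; apply Rle_Rpower; auto. Qed.

Lemma Rp_base_le a b c : 0 < a <= b -> 0 <= c -> Rpower a c <= Rpower b c.
Proof. intros; apply Rle_Rpower_l; auto. Qed.

Lemma coord_main r u v p lam H Q B : 0 < v -> v <= r -> r <= u -> u <= p -> 1 / 2 <= p -> 0 < lam ->
  H = Rpower 2 (p + u) * Rpower (2 + 1 / (2 * v)) (u / (2 * v)) ->
  Q = / lam * H ^ 2 -> Rpower 4 (2 * p) * Rpower 2 (2 * u) <= Q ->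
  exp (1 / (2 * u)) * (1 + 2 * fsum (fun m => exp (- lam * Rpower (INR m) (2 * r))) (seq 1 B))
    <= Rpower (Q * exp 1) (/ (2 * r)).
Proof.
  intros Hv Hvr Hru Hup Hp Hlam HH HQ HQb.
  assert (Hr : 0 < r) by lra.
  assert (HHp : 0 < H) by (rewrite HH; apply Rmult_lt_0_compat; apply Rpower_pos).
  assert (HQp : 0 < Q) by (rewrite HQ; apply Rmult_lt_0_compat; [apply Rinv_0_lt_compat; auto| apply pow_lt; auto]).
  set (L := Rpower (/ lam) (/ (2 * r))).
  assert (HL : 0 < L) by apply Rpower_pos.
  assert (HL2 : Rpower L (2 * r) = / lam).
  { unfold L. rewrite Rpower_mult. replace (/ (2 * r) * (2 * r)) with 1 by (field; lra). apply Rpower_1. apply Rinv_0_lt_compat; auto. }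
  rewrite (fsum_ext_in _ (fun m => exp (- Rpower (INR m / L) (2 * r)))).
  2:{ intros m Hm. apply in_seq in Hm. assert (0 < INR m) by (apply lt_0_INR; lia).
      rewrite Rpower_div by auto. rewrite HL2. f_equal. field. lra. }
  set (a := Rpower Q (/ (2 * r))). set (b := Rpower H (/ r)).
  assert (Hab : a = L * b).
  { unfold a, b, L. rewrite HQ. rewrite Rpower_mul_base.
    f_equal. rewrite <- Rpower_2 by auto. rewrite Rpower_mult. f_equal. field. lra.
    apply Rinv_0_lt_compat; auto. apply pow_lt; auto. }
  assert (Hbase : 0 < Rpower 4 (2 * p) * Rpower 2 (2 * u)) by (apply Rmult_lt_0_compat; apply Rpower_pos).
  assert (Ha : Rpower 4 (p / r) * Rpower 2 (u / r) <= a).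
  { unfold a. eapply Rle_trans; [|apply Rp_base_le; [split; [apply Hbase|apply HQb]| left; apply Rinv_0_lt_compat; lra]].
    rewrite Rpower_mul_base by (apply Rpower_pos). rewrite !Rpower_mult.
    right. f_equal; f_equal; field; lra. }
  assert (Hb : b = Rpower 2 ((p + u) / r) * Rpower (2 + 1 / (2 * v)) (u / (2 * v) / r)).
  { unfold b. rewrite HH. rewrite Rpower_mul_base by (apply Rpower_pos). rewrite !Rpower_mult. f_equal; f_equal; field; lra. }
  assert (Hv2 : 1 <= 2 + 1 / (2 * v)). { assert (0 < 1 / (2 * v)) by (apply Rdiv_lt_0_compat; lra). lra. }
  assert (HSa : 1 + 2 * fsum (fun m => exp (- Rpower (INR m / L) (2 * r))) (seq 1 B) <= a).
  { destruct (Rle_dec (1 / 2) r) as [Hr2|Hr2].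
    - apply (coord_a (2 * r) L a b B); auto. lra.
      + assert (4 <= Rpower 4 (p / r)). { rewrite <- (Rpower_1 4) at 1 by lra. apply Rp_exp_le. lra.
          apply Rmult_le_reg_r with r; auto. unfold Rdiv; rewrite Rmult_assoc, Rinv_l by lra. lra. }
        assert (2 <= Rpower 2 (u / r)). { rewrite <- (Rpower_1 2) at 1 by lra. apply Rp_exp_le. lra.
          apply Rmult_le_reg_r with r; auto. unfold Rdiv; rewrite Rmult_assoc, Rinv_l by lra. lra. }
        nra.
      + rewrite Hb. assert (4 <= Rpower 2 ((p + u) / r)).
        { replace 4 with (Rpower 2 2). apply Rp_exp_le. lra.
          apply Rmult_le_reg_r with r; auto. unfold Rdiv; rewrite Rmult_assoc, Rinv_l by lra. lra.
          rewrite Rpower_2 by lra. ring. }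
        assert (1 <= Rpower (2 + 1 / (2 * v)) (u / (2 * v) / r)).
        { apply Rpower_ge1_; auto. apply Rdiv_le_0_compat; [|lra]. apply Rdiv_le_0_compat; lra. }
        nra.
    - set (x := / (2 * r)).
      assert (Hx : 1 <= x). { unfold x. rewrite <- Rinv_1. apply Rinv_le_contravar; lra. }
      apply (coord_b (2 * r) L a b B); auto. lra.
      + fold x. assert (Rpower 4 x <= Rpower 4 (p / r)). { apply Rp_exp_le. lra. unfold x.
          apply Rmult_le_reg_r with (2 * r). lra. field_simplify; try lra. }
        assert (2 <= Rpower 2 (u / r)). { rewrite <- (Rpower_1 2) at 1 by lra. apply Rp_exp_le. lra.
          apply Rmult_le_reg_r with r; auto. unfold Rdiv; rewrite Rmult_assoc, Rinv_l by lra. lra. }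
        pose proof (Rpower_pos 4 x). nra.
      + fold x. rewrite Hb.
        assert (E1 : Rpower 2 (x + 1) <= Rpower 2 ((p + u) / r)).
        { apply Rp_exp_le. lra. unfold x. apply Rmult_le_reg_r with (2 * r). lra. field_simplify; try lra. }
        rewrite Rpower_plus, Rpower_1 in E1 by lra.
        assert (E2 : Rpower (2 + x) x <= Rpower (2 + 1 / (2 * v)) (u / (2 * v) / r)).
        { apply Rle_trans with (Rpower (2 + 1 / (2 * v)) x).
          apply Rp_base_le. split. lra. assert (x <= 1 / (2 * v)). { unfold x. unfold Rdiv. rewrite Rmult_1_l. apply Rinv_le_contravar; lra. } lra. lra.
          apply Rp_exp_le; auto. unfold x. apply Rmult_le_reg_r with (2 * r). lra. field_simplify; try lra.
          apply Rmult_le_reg_r with v; auto. field_simplify; lra. }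
        assert (Rpower (4 + 2 * x) x = Rpower 2 x * Rpower (2 + x) x).
        { rewrite <- Rpower_mul_base by lra. f_equal. ring. }
        rewrite H0. pose proof (Rpower_pos 2 x). pose proof (Rpower_pos (2 + x) x). nra. }
  rewrite Rpower_mul_base by (auto; apply exp_pos). rewrite Rpower_exp. fold a.
  assert (exp (1 / (2 * u)) <= exp (/ (2 * r) * 1)).
  { apply exp_le. rewrite Rmult_1_r. unfold Rdiv. rewrite Rmult_1_l. apply Rinv_le_contravar; lra. }
  assert (0 <= 1 + 2 * fsum (fun m => exp (- Rpower (INR m / L) (2 * r))) (seq 1 B)).
  { pose proof (fsum_nonneg (fun m => exp (- Rpower (INR m / L) (2 * r))) (seq 1 B) (fun m => Rlt_le _ _ (exp_pos _))). lra. }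
  pose proof (exp_pos (1 / (2 * u))). rewrite Rmult_comm. apply Rmult_le_compat; auto. lra.
Qed.

Lemma upper_main d Rv n a u v p E : (1 <= d)%nat -> (forall j, (j < d)%nat -> 0 < Rv j) ->
  (forall j, (j < d)%nat -> v <= Rv j <= u) -> 0 < v -> v <= u -> u <= p -> 1 / 2 <= p ->
  E = Rpower 4 (p / v) * Rpower 2 (u / v) * Rpower (1 + 1 / (2 * v)) (u / (2 * v ^ 2))
      * Rpower (2 * exp 1 * p) (1 / (2 * v)) ->
  E ^ d < INR n -> is_approx_number d Rv n a ->
  Rpower (INR n) (gR d Rv) * a
    <= Rpower 2 (p + u) * Rpower (1 + (2 * v + 1) / (2 * v)) (u / (2 * v)) * sqrt (2 * exp 1 * u / INR d).
Proof.
  intros Hd Hpos Hb Hv Hvu Hup Hp HE HnE Ha.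
  set (Sg := fold_right (fun j acc => / Rv j + acc) 0 (seq 0 d)).
  assert (Hdr : 1 <= INR d) by (replace 1 with (INR 1) by auto; apply le_INR; auto).
  destruct (Sg_bounds d Rv u v Hv Hb) as [HSg1 HSg2]. fold Sg in HSg1, HSg2.
  assert (HSg : 0 < Sg) by (assert (0 < INR d / u) by (apply Rdiv_lt_0_compat; lra); lra).
  assert (Hg : gR d Rv = / Sg) by reflexivity.
  pose proof e_ge2 as He. pose proof (exp_pos 1) as He0.
  set (g := gR d Rv) in *.
  assert (Hgp : 0 < g) by (rewrite Hg; apply Rinv_0_lt_compat; auto).
  assert (Hdg : v <= INR d * g).
  { assert (v * Sg <= INR d). { replace (INR d) with (v * (INR d / v)) by (field; lra). apply Rmult_le_compat_l; lra. }
    rewrite Hg. apply Rmult_le_reg_r with Sg; auto. replace (INR d * / Sg * Sg) with (INR d) by (field; lra). lra. }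
  assert (HE1 : 1 <= E).
  { rewrite HE. assert (0 < 1 / (2 * v)) by (apply Rdiv_lt_0_compat; lra).
    assert (1 <= Rpower 4 (p / v)) by (apply Rpower_ge1; [lra| apply Rdiv_le_0_compat; lra]).
    assert (1 <= Rpower 2 (u / v)) by (apply Rpower_ge1; [lra| apply Rdiv_le_0_compat; lra]).
    assert (1 <= Rpower (1 + 1 / (2 * v)) (u / (2 * v ^ 2))).
    { apply Rpower_ge1. lra. apply Rdiv_le_0_compat. lra. nra. }
    assert (1 <= Rpower (2 * exp 1 * p) (1 / (2 * v))).
    { apply Rpower_ge1. nra. lra. }
    assert (1 <= Rpower 4 (p / v) * Rpower 2 (u / v)) by nra.
    assert (1 <= Rpower 4 (p / v) * Rpower 2 (u / v) * Rpower (1 + 1 / (2 * v)) (u / (2 * v ^ 2))) by nra.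
    nra. }
  assert (HEd : 1 <= E ^ d) by (apply pow_R1_Rle; auto).
  set (Y := Rpower (INR n) (2 * g)).
  assert (HY : Rpower 4 (2 * p) * Rpower 2 (2 * u) * exp 1 <= Y).
  { assert (HY1 : Rpower E (2 * v) <= Y).
    { unfold Y. apply Rle_trans with (Rpower E (INR d * (2 * g))).
      apply Rle_Rpower; auto. nra.
      rewrite <- Rpower_mult. rewrite Rpower_pow by lra. left. apply Rlt_Rpower_l. lra. split; auto. lra. }
    eapply Rle_trans; [|apply HY1]. rewrite HE.
    rewrite !Rpower_mul_base; try (apply Rpower_pos || apply Rmult_lt_0_compat; try apply Rpower_pos; try apply Rmult_lt_0_compat; try apply Rpower_pos; nra).
    2: nra.
    rewrite !Rpower_mult.
    replace (p / v * (2 * v)) with (2 * p) by (field; lra).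
    replace (u / v * (2 * v)) with (2 * u) by (field; lra).
    replace (1 / (2 * v) * (2 * v)) with 1 by (field; lra). rewrite !Rpower_1 by (try apply exp_pos; lra).
    assert (1 <= Rpower (1 + 1 / (2 * v)) (u / (2 * v ^ 2) * (2 * v))).
    { apply Rpower_ge1. assert (0 < 1 / (2 * v)) by (apply Rdiv_lt_0_compat; lra). lra.
      replace (u / (2 * v ^ 2) * (2 * v)) with (u / v) by (field; lra). apply Rdiv_le_0_compat; lra. }
    assert (0 < Rpower 4 (2 * p) * Rpower 2 (2 * u)) by (apply Rmult_lt_0_compat; apply Rpower_pos).
    assert (exp 1 <= 2 * exp 1 * p) by nra.
    assert (Rpower 4 (2 * p) * Rpower 2 (2 * u) <= Rpower 4 (2 * p) * Rpower 2 (2 * u) * Rpower (1 + 1 / (2 * v)) (u / (2 * v ^ 2) * (2 * v))) by nra.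
    nra. all: try apply exp_pos; lra. }
  set (hi := Rpower 2 (p + u) * Rpower (1 + (2 * v + 1) / (2 * v)) (u / (2 * v)) * sqrt (2 * exp 1 * u / INR d)).
  set (Hc := Rpower 2 (p + u) * Rpower (2 + 1 / (2 * v)) (u / (2 * v))).
  assert (Hhi : hi = Hc * sqrt (2 * exp 1 * u / INR d)).
  { unfold hi, Hc. replace (1 + (2 * v + 1) / (2 * v)) with (2 + 1 / (2 * v)) by (field; lra). auto. }
  assert (HcP : 0 < Hc) by (unfold Hc; apply Rmult_lt_0_compat; apply Rpower_pos).
  assert (Hq : 0 < 2 * exp 1 * u / INR d) by (apply Rdiv_lt_0_compat; nra).
  assert (Hsq : 0 < sqrt (2 * exp 1 * u / INR d)) by (apply sqrt_lt_R0; auto).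
  assert (hip : 0 < hi) by (rewrite Hhi; apply Rmult_lt_0_compat; auto).
  assert (Hhi2 : hi ^ 2 = Hc ^ 2 * (2 * exp 1 * u / INR d)).
  { rewrite Hhi. rewrite Rpow_mult_distr. rewrite pow2_sqrt; lra. }
  set (ng := Rpower (INR n) g).
  assert (Hngp : 0 < ng) by apply Rpower_pos.
  assert (Hng : ng ^ 2 = Y). { unfold ng, Y. rewrite <- Rpower_2 by apply Rpower_pos. rewrite Rpower_mult. f_equal; ring. }
  set (T := (ng / hi) ^ 2).
  assert (HT : 0 < T) by (unfold T; apply pow_lt; apply Rdiv_lt_0_compat; auto).
  assert (HThi : T * hi ^ 2 = Y) by (unfold T; rewrite <- Hng; field; lra).
  set (lam := INR d / (2 * u * T)).
  assert (Hlam : 0 < lam) by (unfold lam; apply Rdiv_lt_0_compat; [lra| apply Rmult_lt_0_compat; lra]).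
  assert (HQ : Y / exp 1 = / lam * Hc ^ 2).
  { rewrite <- HThi, Hhi2. unfold lam. field. repeat split; lra. }
  assert (HQb : Rpower 4 (2 * p) * Rpower 2 (2 * u) <= Y / exp 1).
  { apply Rmult_le_reg_r with (exp 1); auto. replace (Y / exp 1 * exp 1) with Y by (field; lra). auto. }
  destruct (up_nat (1 + Rpower T (/ (2 * v)))) as [B [HB1 HB2]].
  { pose proof (Rpower_pos T (/ (2 * v))). lra. }
  assert (HBj : forall j, (j < d)%nat -> Rpower T (/ (2 * Rv j)) <= INR B).
  { intros j Hj. destruct (Hb j Hj). pose proof (Rpower_pos T (/ (2 * v))).
    destruct (Rle_dec 1 T).
    - assert (Rpower T (/ (2 * Rv j)) <= Rpower T (/ (2 * v))).
      { apply Rle_Rpower; auto. apply Rinv_le_contravar; lra. }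
      lra.
    - assert (Rpower T (/ (2 * Rv j)) <= 1). { apply Rpower_le1. lra. left; apply Rinv_0_lt_compat; lra. }
      lra. }
  destruct (count_F d Rv T lam B HT Hlam Hpos HBj) as [F [HF [Hcnt Hcomp]]].
  set (rs := map Rv (seq 0 d)) in *.
  set (Sf := fun r => 1 + 2 * fsum (fun m => exp (- lam * Rpower (INR m) (2 * r))) (seq 1 B)).
  change (INR (length F) <= exp (lam * (T - 1)) * fold_right (fun r acc => Sf r * acc) 1 rs) in Hcnt.
  assert (HSf1 : forall r, 1 <= Sf r).
  { intros r. unfold Sf. pose proof (fsum_nonneg (fun m => exp (- lam * Rpower (INR m) (2 * r))) (seq 1 B) (fun m => Rlt_le _ _ (exp_pos _))). lra. }
  assert (Hper : forall r, In r rs -> 0 <= exp (1 / (2 * u)) * Sf r <= Rpower Y (/ (2 * r))).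
  { intros r Hr. unfold rs in Hr. apply in_map_iff in Hr. destruct Hr as [j [Ej Hj]]. apply in_seq in Hj.
    destruct (Hb j ltac:(lia)). subst r. split.
    - pose proof (HSf1 (Rv j)). pose proof (exp_pos (1 / (2 * u))). nra.
    - pose proof (coord_main (Rv j) u v p lam Hc (Y / exp 1) B Hv H H0 Hup Hp Hlam eq_refl HQ HQb).
      replace (Y / exp 1 * exp 1) with Y in H1 by (field; lra). exact H1. }
  assert (Hprod : exp (1 / (2 * u)) ^ d * fold_right (fun r acc => Sf r * acc) 1 rs <= INR n).
  { replace d with (length rs) at 1 by (unfold rs; rewrite length_map, length_seq; auto).
    rewrite <- prod_const. eapply Rle_trans. apply prod_le. apply Hper.
    unfold rs. rewrite prod_rpower. fold Sg. unfold Y. rewrite Rpower_mult. replace (2 * g * (Sg / 2)) with 1.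
    rewrite Rpower_1; lra. rewrite Hg. field; lra. apply Rpower_pos. apply pos_seq; auto. }
  assert (HPi : 0 < fold_right (fun r acc => Sf r * acc) 1 rs).
  { apply prod_pos. intros r _. pose proof (HSf1 r). lra. }
  assert (Hexp : exp (lam * (T - 1)) < exp (1 / (2 * u)) ^ d).
  { rewrite <- exp_INR_mul. apply exp_increasing. replace (INR d * (1 / (2 * u))) with (lam * T).
    nra. unfold lam. field. split; lra. }
  assert (Hlen : (length F < n)%nat).
  { apply INR_lt. eapply Rle_lt_trans. apply Hcnt. eapply Rlt_le_trans; [|apply Hprod].
    apply Rmult_lt_compat_r; auto. }
  pose proof (proj_ok d Rv n T F HT HF Hlen Hcomp) as Happ.
  destruct Ha as [Ha1 _]. pose proof (Ha1 _ Happ).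
  assert (Hsq2 : sqrt T = ng / hi). { unfold T. apply sqrt_pow2. left; apply Rdiv_lt_0_compat; auto. }
  rewrite Hsq2 in H. fold hi.
  apply Rmult_le_reg_l with (/ ng). apply Rinv_0_lt_compat; auto.
  replace (/ ng * (ng * a)) with a by (field; lra). eapply Rle_trans. apply H. right. field. split; lra.
Qed.

Theorem lemma3p5 (d : nat) (Rv : nat -> R) :
  (1 <= d)%nat ->
  (forall j, (j < d)%nat -> 0 < Rv j) ->
  forall n : nat, Econst d Rv ^ d < INR n ->
  forall a : R, is_approx_number d Rv n a ->
  let u := Rmaxd d Rv in let v := Rmind d Rv in let p := Rmax (1/2) u in
  Rpower 2 (v - p) * sqrt (1 / (exp 1 * (INR d + 2 * u)))
    <= Rpower (INR n) (gR d Rv) * a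
  /\ Rpower (INR n) (gR d Rv) * a
    <= Rpower 2 (p + u) * Rpower (1 + (2 * v + 1) / (2 * v)) (u / (2 * v))
       * sqrt (2 * exp 1 * u / INR d).
Proof.
  intros Hd Hpos n HnE a Ha u v p.
  assert (Hb : forall j, (j < d)%nat -> v <= Rv j <= u).
  { intros j Hj. split.
    - apply fmin_le. left. apply in_seq. lia.
    - apply fmax_ge. left. apply in_seq. lia. }
  assert (Hv : 0 < v).
  { apply fmin_pos. apply Hpos; lia. apply pos_seq; auto. }
  assert (Hvu : v <= u) by (destruct (Hb 0%nat ltac:(lia)); lra).
  assert (Hup : u <= p) by apply Rmax_r.
  assert (Hp : 1 / 2 <= p) by apply Rmax_l.
  assert (HE : Econst d Rv = Rpower 4 (p / v) * Rpower 2 (u / v) * Rpower (1 + 1 / (2 * v)) (u / (2 * v ^ 2))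
      * Rpower (2 * exp 1 * p) (1 / (2 * v))) by reflexivity.
  assert (HEp : 0 < Econst d Rv).
  { rewrite HE. repeat apply Rmult_lt_0_compat; apply Rpower_pos. }
  assert (Hn : 1 <= INR n).
  { pose proof (pow_lt _ d HEp). destruct n. simpl in HnE. lra. rewrite S_INR. pose proof (pos_INR n). lra. }
  split.
  - apply lower_main; auto. lra.
  - apply (upper_main d Rv n a u v p (Econst d Rv)); auto.
Qed.
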